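(* Let $\Omega\subset\mathbb{R}^3$ be the unit ball. For $r_1\in(0,1)$, $\sigma_1>0$ let $R_{\sigma_1,r_1}:H^{-1/2}(\partial\Omega)\to H^{1/2}(\partial\Omega)$ be the Neumann-to-Dirichlet map of the three-dimensional core-shell problem and $R$ the Neumann-to-Dirichlet map of the homogeneous ball problem (defined in the context). Then: (1) for any fixed $r_1\in(0,1)$, $\|R_{\sigma_1,r_1}-R\|\to0$ as $\sigma_1\to1$; (2) for any fixed $\sigma_1>0$, $\|R_{\sigma_1,r_1}-R\|\to0$ as $r_1\to0$. Here $\|\cdot\|$ is the operator norm from $H^{-1/2}(\partial\Omega)$ to $H^{1/2}(\partial\Omega)$.
   Context: Spherical coordinates $(r,\theta,\phi)$, $\mu=\cos\theta$. $I_{n+1/2},K_{n+1/2}$ are modified Bessel functions of first and second kind of order $n+\tfrac12$; $P_n^{|m|}$ are associated Legendre functions; $g_{nm}=(g,P_n^{|m|}(\mu)e^{im\phi})$ for $n\ge0$, $|m|\le n$. Let $\Delta$ denote the Laplacian in $\mathbb{R}^3$. Core-shell problem: given $r_1,\sigma_1$ and $g\in H^{-1/2}(\partial\Omega)$, $\psi$ solves $\Delta\psi-\sigma_1^{-1}\psi=0$ in $r<r_1$, $\Delta\psi-\psi=0$ in $r_1<r<1$, $\psi|_{r=r_1}^+=\psi|_{r=r_1}^-$, $\partial_r\psi|_{r=r_1}^+=\sigma_1\partial_r\psi|_{r=r_1}^-$ ($\pm$ = limits from outside/inside the sphere $r=r_1$), $\partial_r\psi|_{r=1}=g$, $\psi$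 bounded at $r=0$ and as $\mu\to\pm1$; $R_{\sigma_1,r_1}(g)=\psi|_{r=1}$. Explicitly $R_{\sigma_1,r_1}(g)=\sum_{n\ge0}\sum_{m=-n}^n\frac{\rho_nK_{n+1/2}(1)-I_{n+1/2}(1)}{\rho_nK_{n+1/2}'(1)-I_{n+1/2}'(1)}g_{nm}P_n^{|m|}(\mu)e^{im\phi}$, with $\rho_n=\frac{\sigma_1I_{n+1/2}'(r_1/\sqrt{\sigma_1})I_{n+1/2}(r_1)-I_{n+1/2}(r_1/\sqrt{\sigma_1})I_{n+1/2}'(r_1)}{\sigma_1I_{n+1/2}'(r_1/\sqrt{\sigma_1})K_{n+1/2}(r_1)-I_{n+1/2}(r_1/\sqrt{\sigma_1})K_{n+1/2}'(r_1)}$. Homogeneous problem: $\Delta\Psi-\Psi=0$ in $r<1$, $\partial_r\Psi|_{r=1}=g$, $\Psi$ bounded at $0$; $R(g)=\Psi|_{r=1}=\sum_{n\ge0}\sum_{m=-n}^n\frac{I_{n+1/2}(1)}{I_{n+1/2}'(1)}g_{nm}P_n^{|m|}(\mu)e^{im\phi}$. *)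

(* Defs.v *)
From Stdlib Require Import Reals Factorial.
From Coquelicot Require Import Coquelicot.
Open Scope R_scope.

Definition Gamma (y : R) : R :=
  RInt_gen (fun t => Rpower t (y - 1) * exp (- t)) (at_right 0) (Rbar_locally p_infty).

Definition besselI (nu x : R) : R :=
  Series (fun k => Rpower (x / 2) (2 * INR k + nu)
                   / (INR (Factorial.fact k) * Gamma (INR k + nu + 1))).

Definition besselK (nu x : R) : R :=
  RInt_gen (fun t => exp (- x * cosh t) * cosh (nu * t)) (at_point 0) (Rbar_locally p_infty).

Definition Ih (n : nat) (x : R) : R := besselI (INR n + / 2) x.
Definition Kh (n : nat) (x : R) : R := besselK (INR n + / 2) x.
Definition dIh (n : nat) (x : R) : R := Derive (Ih n) x.
Definition dKh (n : nat) (x : R) : R := Derive (Kh n) x.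

Definition rho (s1 r1 : R) (n : nat) : R :=
  let a := r1 / sqrt s1 in
  (s1 * dIh n a * Ih n r1 - Ih n a * dIh n r1)
  / (s1 * dIh n a * Kh n r1 - Ih n a * dKh n r1).

Definition lam_cs (s1 r1 : R) (n : nat) : R :=
  (rho s1 r1 n * Kh n 1 - Ih n 1) / (rho s1 r1 n * dKh n 1 - dIh n 1).

Definition lam_hom (n : nat) : R := Ih n 1 / dIh n 1.

(** Distributions on the unit sphere are represented by their coefficients
    c n j (n >= 0, 0 <= j <= 2n, j <-> m = j - n) in an L^2-orthonormal basis
    of spherical harmonics Y_n^m; entries with j > 2n are irrelevant. *)
Definition sph_coeffs := nat -> nat -> C.

Definition hs_term (s : R) (c : sph_coeffs) (n : nat) : R :=
  Rpower (1 + INR n * (INR n + 1)) s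
  * sum_f_R0 (fun j => (Cmod (c n j)) ^ 2) (2 * n).

Definition hs_normsq (s : R) (c : sph_coeffs) : Rbar :=
  Lim_seq (sum_n (hs_term s c)).

Definition in_Hs (s : R) (c : sph_coeffs) : Prop := ex_series (hs_term s c).

Definition multiplier (lam : nat -> R) (c : sph_coeffs) : sph_coeffs :=
  fun n j => Cmult (RtoC (lam n)) (c n j).

(** Operator norm H^{-1/2} -> H^{1/2}: inf of M >= 0 with ||T c||_{1/2} <= M ||c||_{-1/2}
    for all c in H^{-1/2} (equal to +oo if there is no such M). *)
Definition opnorm_m12_12 (T : sph_coeffs -> sph_coeffs) : Rbar :=
  Glb_Rbar (fun M => 0 <= M /\
    forall c, in_Hs (- / 2) c ->
      Rbar_le (hs_normsq (/ 2) (T c)) (Finite (M ^ 2 * Series (hs_term (- / 2) c)))).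

Definition NtD_cs (s1 r1 : R) : sph_coeffs -> sph_coeffs := multiplier (lam_cs s1 r1).
Definition NtD_hom : sph_coeffs -> sph_coeffs := multiplier lam_hom.

Definition NtD_diff (s1 r1 : R) : sph_coeffs -> sph_coeffs :=
  fun c n j => Cminus (NtD_cs s1 r1 c n j) (NtD_hom c n j).

(* Main.v *)
Require Import Defs.
From Stdlib Require Import Reals.
From Coquelicot Require Import Coquelicot.
From Stdlib Require Import Lra Lia Psatz Factorial Classical.
Open Scope R_scope.

Lemma is_RInt_gen_of {Fa Fb : (R -> Prop) -> Prop} {FFa : Filter Fa} {FFb : Filter Fb}
  (f : R -> R) (F : R -> R -> R) (L : R) :
  filter_prod Fa Fb (fun ab => is_RInt f (fst ab) (snd ab) (F (fst ab) (snd ab))) ->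
  filterlim (fun ab => F (fst ab) (snd ab)) (filter_prod Fa Fb) (locally L) ->
  is_RInt_gen f Fa Fb L.
Proof.
  intros H1 H2 P HP.
  unfold filtermapi.
  specialize (H2 P HP). unfold filtermap in H2.
  generalize (filter_and _ _ H1 H2).
  apply filter_imp. intros [a b] [Ha Hb]. exists (F a b). split; assumption.
Qed.

Lemma filterlim_prod_eps {Fa Fb : (R -> Prop) -> Prop} {FFa : Filter Fa} {FFb : Filter Fb}
  (F : R -> R -> R) (L : R) :
  (forall eps : R, 0 < eps -> exists Pa Pb, Fa Pa /\ Fb Pb /\
     forall a b, Pa a -> Pb b -> Rabs (F a b - L) < eps) ->
  filterlim (fun ab => F (fst ab) (snd ab)) (filter_prod Fa Fb) (locally L).
Proof.
  intros H P [e He]. unfold filtermap.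
  destruct (H e (cond_pos e)) as [Pa [Pb [HPa [HPb HF]]]].
  apply Filter_prod with Pa Pb; auto.
  intros a b Ha Hb. apply He. apply (HF a b Ha Hb).
Qed.

Lemma is_RInt_gen_nonneg (a : R) (g : R -> R) (l : R) :
  is_RInt_gen g (at_point a) (Rbar_locally p_infty) l ->
  (forall x, a <= x -> 0 <= g x) -> 0 <= l.
Proof.
  intros Hg Hpos.
  assert (H: norm l <= l).
  { apply (RInt_gen_norm (Fa := at_point a) (Fb := Rbar_locally p_infty) g g l l); auto.
    - apply Filter_prod with (fun x => x = a) (fun y => a < y).
      + unfold at_point. reflexivity.
      + exists a. auto.
      + intros x y -> Hy. simpl. lra.
    - apply Filter_prod with (fun x => x = a) (fun y => a < y).
      + unfold at_point. reflexivity.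
      + exists a. auto.
      + intros x y -> Hy. simpl. intros z Hz. 
        rewrite Rabs_pos_eq. lra. apply Hpos. lra. }
  unfold norm in H; simpl in H. unfold abs in H; simpl in H.
  generalize (Rabs_pos l). lra.
Qed.

Lemma monotone_gen {Fa Fb : (R -> Prop) -> Prop} {FFa : ProperFilter Fa} {FFb : ProperFilter Fb}
  (f : R -> R) (F : R -> R -> R) (Sa Sb : R -> Prop) (M : R) :
  Fa Sa -> Fb Sb ->
  (forall a b, Sa a -> Sb b -> is_RInt f a b (F a b)) ->
  (forall a b, Sa a -> Sb b -> F a b <= M) ->
  (forall a0 b0, Sa a0 -> Sb b0 -> exists Pa Pb, Fa Pa /\ Fb Pb /\
       forall a b, Pa a -> Pb b -> F a0 b0 <= F a b) ->
  exists L, is_RInt_gen f Fa Fb L /\ forall a b, Sa a -> Sb b -> F a b <= L.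
Proof.
  intros HSa HSb H1 H2 H3.
  set (E := fun z => exists a b, Sa a /\ Sb b /\ z = F a b).
  destruct (filter_ex _ HSa) as [a1 Ha1].
  destruct (filter_ex _ HSb) as [b1 Hb1].
  assert (HbE : bound E). { exists M. intros z [a [b [Ha [Hb ->]]]]. apply H2; auto. }
  assert (Hne : exists z, E z). { exists (F a1 b1). exists a1, b1. auto. }
  destruct (completeness E HbE Hne) as [L [HL1 HL2]].
  exists L. split.
  - apply is_RInt_gen_of with F.
    + apply Filter_prod with Sa Sb; auto.
    + apply filterlim_prod_eps. intros eps Heps.
      assert (Hex : exists a0 b0, Sa a0 /\ Sb b0 /\ L - eps < F a0 b0).
      { apply Classical_Prop.NNPP. intro Hn.
        assert (L <= L - eps). { apply HL2. intros z [a [b [Ha [Hb ->]]]].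
          apply Rnot_lt_le. intro Hc. apply Hn. exists a, b. auto. }
        lra. }
      destruct Hex as [a0 [b0 [Ha0 [Hb0 Hlt]]]].
      destruct (H3 a0 b0 Ha0 Hb0) as [Pa [Pb [HPa [HPb Hm]]]].
      exists (fun a => Pa a /\ Sa a), (fun b => Pb b /\ Sb b).
      split. apply filter_and; auto. split. apply filter_and; auto.
      intros a b [Ha Ha'] [Hb Hb'].
      assert (F a b <= L). { apply HL1. exists a, b. auto. }
      specialize (Hm a b Ha Hb).
      apply Rabs_def1; lra.
  - intros a b Ha Hb. apply HL1. exists a, b. auto.
Qed.

Lemma sum_n_ge_term (a : nat -> R) (k : nat) :
  (forall n, 0 <= a n) -> a k <= sum_n a k.
Proof.
  intros Ha. destruct k. rewrite sum_O. lra.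
  rewrite sum_Sn. simpl. unfold plus; simpl.
  assert (0 <= sum_n a k).
  { induction k. rewrite sum_O. auto. rewrite sum_Sn. unfold plus; simpl.
    specialize (Ha (S k)). lra. }
  lra.
Qed.

Lemma sum_n_le_lim (a : nat -> R) (l : R) (k : nat) :
  (forall n, 0 <= a n) -> is_series a l -> sum_n a k <= l.
Proof.
  intros Ha Hs. apply (is_lim_seq_incr_compare (sum_n a)).
  apply Hs. intros n. rewrite sum_Sn. unfold plus; simpl. specialize (Ha (S n)). lra.
Qed.

Lemma term_le_series (a : nat -> R) (l : R) (k : nat) :
  (forall n, 0 <= a n) -> is_series a l -> a k <= l.
Proof.
  intros Ha Hs. eapply Rle_trans. apply sum_n_ge_term; auto. apply sum_n_le_lim; auto.
Qed.

Lemma exp_ge_pow (s : R) (m : nat) : 0 <= s -> s ^ m / INR (fact m) <= exp s.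
Proof.
  intros Hs.
  generalize (is_exp_Reals s). intro H.
  unfold is_pseries in H.
  assert (Hs' : is_series (fun n => s ^ n / INR (fact n)) (exp s)).
  { eapply is_series_ext. 2: apply H. intros n. simpl. unfold scal; simpl.
    unfold mult; simpl. rewrite pow_n_pow. unfold Rdiv. ring. }
  apply (term_le_series (fun n => s ^ n / INR (fact n))); auto.
  intros n. apply Rmult_le_pos. apply pow_le; auto.
  apply Rlt_le, Rinv_0_lt_compat, INR_fact_lt_0.
Qed.


Lemma is_derive_Rpower' (y x : R) : 0 < x -> is_derive (fun t => Rpower t y) x (y * Rpower x (y - 1)).
Proof. intros Hx. apply is_derive_Reals. apply derivable_pt_lim_power; auto. Qed.

Lemma ex_derive_Rpower (y x : R) : 0 < x -> ex_derive (fun t => Rpower t y) x.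
Proof. intros Hx. eexists. apply is_derive_Rpower'; auto. Qed.

Lemma Derive_Rpower (y x : R) : 0 < x -> Derive (fun t => Rpower t y) x = y * Rpower x (y - 1).
Proof. intros Hx. apply is_derive_unique. apply is_derive_Rpower'; auto. Qed.

Definition gf (y t : R) : R := Rpower t (y - 1) * exp (- t).

Lemma gf_cont (y z : R) : 0 < z -> continuous (gf y) z.
Proof.
  intros Hz. apply (ex_derive_continuous (gf y)). unfold gf.
  apply ex_derive_mult. apply ex_derive_Rpower; auto. auto_derive. auto.
Qed.

Lemma gf_exRInt (y a b : R) : 0 < a -> 0 < b -> ex_RInt (gf y) a b.
Proof.
  intros Ha Hb. apply (ex_RInt_continuous (V:=R_CompleteNormedModule)). intros z Hz. apply gf_cont.
  assert (0 < Rmin a b) by (apply Rmin_glb_lt; auto). lra.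
Qed.

Lemma gf_pos (y t : R) : 0 < t -> 0 < gf y t.
Proof. intros. unfold gf, Rpower. apply Rmult_lt_0_compat; apply exp_pos. Qed.

Lemma exp_le' (x y : R) : x <= y -> exp x <= exp y.
Proof. intros [H|H]. left; apply exp_increasing; auto. subst; lra. Qed.

Lemma ln_nonpos (t : R) : 0 < t <= 1 -> ln t <= 0.
Proof.
  intros [H1 [H2|H2]]. left. rewrite <- ln_1. apply ln_increasing; auto.
  subst. rewrite ln_1. lra.
Qed.

Lemma Rpower_le_one (t p : R) : 0 < t <= 1 -> 0 <= p -> Rpower t p <= 1.
Proof.
  intros Ht Hp. unfold Rpower. rewrite <- exp_0. apply exp_le'.
  generalize (ln_nonpos t Ht). nra.
Qed.

Lemma Rpower_le_self (t p : R) : 0 < t <= 1 -> 1 <= p -> Rpower t p <= t.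
Proof.
  intros Ht Hp. unfold Rpower. rewrite <- (exp_ln t) at 2 by lra. apply exp_le'.
  generalize (ln_nonpos t Ht). nra.
Qed.

Lemma Rpower_le_pow (t p : R) (m : nat) : 1 <= t -> p <= INR m -> Rpower t p <= t ^ m.
Proof.
  intros Ht Hp. rewrite <- Rpower_pow by lra. apply Rle_Rpower; auto.
Qed.

Lemma pow_exp_le (t : R) (m : nat) : 0 < t -> t ^ m * exp (- t) <= INR (fact (S m)) / t.
Proof.
  intros Ht. generalize (exp_ge_pow t (S m) (Rlt_le _ _ Ht)). intros H.
  rewrite exp_Ropp. generalize (exp_pos t) (INR_fact_lt_0 (S m)). intros He Hf.
  set (F := INR (fact (S m))) in *. set (E := exp t) in *.
  assert (H2 : t ^ S m <= E * F).
  { apply Rmult_le_reg_r with (/ F). apply Rinv_0_lt_compat; lra.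
    replace (E * F * / F) with E by (field; lra). exact H. }
  simpl in H2.
  assert (Hg : t ^ m * / E = (t * t ^ m) / (t * E)) by (field; lra).
  rewrite Hg. unfold Rdiv. apply Rmult_le_reg_r with (t * E). nra.
  replace (t * t ^ m * / (t * E) * (t * E)) with (t * t^m) by (field; lra).
  replace (F * / t * (t * E)) with (E * F) by (field; lra). exact H2.
Qed.

Lemma pow_exp_half (t : R) (m : nat) : 1 <= t ->
  t ^ m * exp (- (t / 2)) <= 2 ^ (S m) * INR (fact (S m)).
Proof.
  intros Ht. assert (Ht2 : 0 < t / 2) by lra.
  generalize (pow_exp_le (t/2) m Ht2). intros H.
  replace (t ^ m) with (2 ^ m * (t / 2) ^ m) by (rewrite <- Rpow_mult_distr; f_equal; field).
  generalize (pow_lt 2 m ltac:(lra)) (INR_fact_lt_0 (S m)). intros H2 Hf.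
  rewrite Rmult_assoc. simpl (2 ^ S m). rewrite (Rmult_assoc 2).
  rewrite (Rmult_comm 2 (2^m * _)). rewrite Rmult_assoc.
  apply Rmult_le_compat_l. lra.
  eapply Rle_trans. apply H.
  apply Rmult_le_reg_r with (t/2). lra.
  unfold Rdiv at 1. rewrite Rmult_assoc. rewrite Rinv_l by lra. nra.
Qed.

Lemma gf_bound (y t : R) (m : nat) : 1 <= y -> y - 1 <= INR m -> 0 < t ->
  gf y t <= (1 + 2 ^ (S m) * INR (fact (S m))) * exp (- (t / 2)).
Proof.
  intros Hy Hm Ht. unfold gf.
  generalize (exp_pos (- (t/2))) (pow_lt 2 (S m) ltac:(lra)) (INR_fact_lt_0 (S m)). intros He H2 Hf.
  assert (Hsplit : exp (- t) = exp (- (t/2)) * exp (- (t/2))).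
  { rewrite <- exp_plus. f_equal. field. }
  destruct (Rle_dec t 1) as [Ht1|Ht1].
  - assert (Rpower t (y - 1) <= 1) by (apply Rpower_le_one; lra).
    assert (exp (- t) <= exp (- (t/2))) by (apply exp_le'; lra).
    assert (0 <= Rpower t (y-1)) by (unfold Rpower; left; apply exp_pos).
    assert (0 <= 2 ^ S m * INR (fact (S m))) by nra.
    nra.
  - assert (Rpower t (y - 1) <= t ^ m) by (apply Rpower_le_pow; lra).
    generalize (pow_exp_half t m ltac:(lra)). intros Hp.
    assert (0 <= Rpower t (y-1)) by (unfold Rpower; left; apply exp_pos).
    rewrite Hsplit.
    assert (Rpower t (y-1) * (exp (- (t / 2)) * exp (- (t / 2))) <= t ^ m * exp (- (t/2)) * exp (- (t/2))).
    { rewrite <- Rmult_assoc. apply Rmult_le_compat_r. lra. apply Rmult_le_compat_r; lra. }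
    nra.
Qed.

Lemma is_RInt_exp_half (C a b : R) :
  is_RInt (fun t => C * exp (- (t / 2))) a b (2 * C * (exp (- (a/2)) - exp (- (b/2)))).
Proof.
  replace (2 * C * (exp (- (a/2)) - exp (- (b/2)))) with
    ((fun t => - 2 * C * exp (- (t/2))) b - (fun t => - 2 * C * exp (- (t/2))) a) by (simpl; ring).
  apply (is_RInt_derive (fun t => - 2 * C * exp (- (t/2)))).
  - intros x _. auto_derive. auto. unfold Rdiv. set (e := exp _). field.
  - intros x _. apply (ex_derive_continuous (fun t => C * exp (- (t / 2)))). auto_derive. auto.
Qed.

Lemma at_right0_interval (c : R) : 0 < c -> at_right 0 (fun a => 0 < a < c).
Proof.
  intros Hc. unfold at_right, within, locally. exists (mkposreal c Hc).
  intros z Hz Hz0. simpl in Hz. unfold ball in Hz; simpl in Hz.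
  unfold AbsRing_ball, abs, minus, plus, opp in Hz; simpl in Hz.
  rewrite Ropp_0, Rplus_0_r in Hz. apply Rabs_def2 in Hz. lra.
Qed.

Lemma pinfty_gt (c : R) : Rbar_locally p_infty (fun b => c < b).
Proof. exists c. auto. Qed.

Lemma RInt_gf_bound (y a b : R) (m : nat) : 1 <= y -> y - 1 <= INR m -> 0 < a -> a <= b ->
  RInt (gf y) a b <= 2 * (1 + 2 ^ (S m) * INR (fact (S m))).
Proof.
  intros Hy Hm Ha Hab. set (C := 1 + 2 ^ (S m) * INR (fact (S m))).
  assert (HC : 0 < C). { unfold C. generalize (pow_lt 2 (S m) ltac:(lra)) (INR_fact_lt_0 (S m)). nra. }
  eapply Rle_trans. apply (RInt_le _ (fun t => C * exp (- (t / 2)))); auto.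
  apply gf_exRInt; lra. eexists; apply is_RInt_exp_half.
  intros x Hx. apply gf_bound; auto; lra.
  rewrite (is_RInt_unique _ _ _ _ (is_RInt_exp_half C a b)).
  generalize (exp_pos (- (b/2))). intros.
  assert (exp (- (a/2)) <= 1). { rewrite <- exp_0. apply exp_le'. lra. }
  nra.
Qed.

Lemma RInt_gf_pos (y a b : R) : 0 < a -> a <= b -> 0 <= RInt (gf y) a b.
Proof.
  intros Ha Hab. apply RInt_ge_0; auto. apply gf_exRInt; lra.
  intros x Hx. left. apply gf_pos. lra.
Qed.

Lemma gamma_ex (y : R) (m : nat) : 1 <= y -> y - 1 <= INR m ->
  exists L, is_RInt_gen (gf y) (at_right 0) (Rbar_locally p_infty) L /\
    forall a b, 0 < a < 1 -> 1 < b -> RInt (gf y) a b <= L.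
Proof.
  intros Hy Hm.
  apply (monotone_gen (gf y) (fun a b => RInt (gf y) a b) (fun a => 0 < a < 1) (fun b => 1 < b)
          (2 * (1 + 2 ^ (S m) * INR (fact (S m))))).
  - apply at_right0_interval; lra.
  - apply pinfty_gt.
  - intros a b Ha Hb. apply (RInt_correct (V:=R_CompleteNormedModule)). apply gf_exRInt; lra.
  - intros a b Ha Hb. apply RInt_gf_bound; auto; lra.
  - intros a0 b0 Ha0 Hb0. exists (fun a => 0 < a < a0), (fun b => b0 < b).
    split. apply at_right0_interval; lra. split. apply pinfty_gt.
    intros a b Ha Hb.
    rewrite <- (RInt_Chasles (gf y) a a0 b) by (apply gf_exRInt; lra).
    rewrite <- (RInt_Chasles (gf y) a0 b0 b) by (apply gf_exRInt; lra).
    unfold plus; simpl.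
    generalize (RInt_gf_pos y a a0 ltac:(lra) ltac:(lra)) (RInt_gf_pos y b0 b ltac:(lra) ltac:(lra)).
    lra.
Qed.

Lemma Gamma_eq (y L : R) : is_RInt_gen (gf y) (at_right 0) (Rbar_locally p_infty) L -> Gamma y = L.
Proof.
  intros H. unfold Gamma. apply (is_RInt_gen_unique (gf y)). exact H.
Qed.

Lemma Gamma_spec (y : R) (m : nat) : 1 <= y -> y - 1 <= INR m ->
  is_RInt_gen (gf y) (at_right 0) (Rbar_locally p_infty) (Gamma y) /\ 0 < Gamma y.
Proof.
  intros Hy Hm. destruct (gamma_ex y m Hy Hm) as [L [HL HLb]].
  rewrite (Gamma_eq y L HL). split; auto.
  eapply Rlt_le_trans. 2: apply (HLb (/2) 2); lra.
  apply RInt_gt_0. lra. intros x Hx. apply gf_pos; lra.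
  intros x Hx. apply gf_cont; lra.
Qed.

Lemma Gamma_rec (y : R) (m : nat) : 1 <= y -> y <= INR m -> Gamma (y + 1) = y * Gamma y.
Proof.
  intros Hy Hm.
  destruct (Gamma_spec y m Hy ltac:(lra)) as [H1 _].
  destruct (Gamma_spec (y+1) m ltac:(lra) ltac:(lra)) as [H2 _].
  generalize (is_RInt_gen_minus _ _ _ _ H2 (is_RInt_gen_scal _ y _ H1)). intros H3.
  set (h := fun t => gf (y+1) t - y * gf y t).
  assert (H4 : is_RInt_gen h (at_right 0) (Rbar_locally p_infty) 0).
  { apply is_RInt_gen_of with (fun a b => Rpower a y * exp (- a) - Rpower b y * exp (- b)).
    - apply Filter_prod with (fun a => 0 < a < 1) (fun b => 1 < b).
      apply at_right0_interval; lra. apply pinfty_gt.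
      intros a b Ha Hb. simpl.
      replace (Rpower a y * exp (- a) - Rpower b y * exp (- b)) with
        ((fun t => - (Rpower t y * exp (- t))) b - (fun t => - (Rpower t y * exp (- t))) a) by (simpl; ring).
      apply (is_RInt_derive (fun t => - (Rpower t y * exp (- t))) h).
      + intros x Hx. rewrite Rmin_left in Hx by lra. rewrite Rmax_right in Hx by lra.
        unfold h, gf. replace (y + 1 - 1) with y by ring.
        auto_derive. apply ex_derive_Rpower; lra.
        rewrite Derive_Rpower by lra. ring.
      + intros x Hx. rewrite Rmin_left in Hx by lra. rewrite Rmax_right in Hx by lra.
        unfold h. apply (continuous_minus (gf (y+1)) (fun t => y * gf y t)).
        apply gf_cont; lra. apply (continuous_scal_r y (gf y)). apply gf_cont; lra.
    - apply (filterlim_prod_eps (fun a b => Rpower a y * exp (- a) - Rpower b y * exp (- b))). intros eps Heps.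
      set (F := INR (fact (S m))). assert (HF : 0 < F) by apply INR_fact_lt_0.
      exists (fun a => 0 < a < Rmin 1 (eps/2)), (fun b => Rmax 1 (2 * F / eps) < b).
      split. apply at_right0_interval. apply Rmin_glb_lt; lra. split. apply pinfty_gt.
      intros a b Ha Hb.
      assert (Ha1 : a < 1) by (generalize (Rmin_l 1 (eps/2)); lra).
      assert (Ha2 : a < eps / 2) by (generalize (Rmin_r 1 (eps/2)); lra).
      assert (Hb1 : 1 < b) by (generalize (Rmax_l 1 (2*F/eps)); lra).
      assert (Hb2 : 2 * F / eps < b) by (generalize (Rmax_r 1 (2*F/eps)); lra).
      assert (A1 : 0 <= Rpower a y * exp (- a) <= a).
      { generalize (Rpower_le_self a y ltac:(lra) Hy). intros.
        assert (0 < Rpower a y) by (unfold Rpower; apply exp_pos).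
        assert (exp (- a) <= 1) by (rewrite <- exp_0; apply exp_le'; lra).
        generalize (exp_pos (- a)). nra. }
      assert (A2 : 0 <= Rpower b y * exp (- b) <= F / b).
      { generalize (Rpower_le_pow b y m ltac:(lra) Hm) (pow_exp_le b m ltac:(lra)). intros.
        assert (0 < Rpower b y) by (unfold Rpower; apply exp_pos).
        generalize (exp_pos (- b)). intros. split. nra.
        eapply Rle_trans. 2: apply H0. apply Rmult_le_compat_r; lra. }
      assert (A3 : F / b < eps / 2).
      { apply Rmult_lt_reg_r with (2 * b / eps). apply Rdiv_lt_0_compat; lra.
        replace (F / b * (2 * b / eps)) with (2 * F / eps) by (field; lra).
        replace (eps / 2 * (2 * b / eps)) with b by (field; lra). lra. }
      rewrite Rminus_0_r. apply Rabs_def1; lra. }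
  assert (H5 : is_RInt_gen h (at_right 0) (Rbar_locally p_infty) (minus (Gamma (y+1)) (scal y (Gamma y)))).
  { eapply is_RInt_gen_ext. 2: exact H3. apply filter_forall. intros ab x _. reflexivity. }
  generalize (is_RInt_gen_unique _ _ H4) (is_RInt_gen_unique _ _ H5). intros E1 E2.
  rewrite E1 in E2. unfold minus, scal, plus, opp in E2; simpl in E2. unfold mult in E2; simpl in E2. lra.
Qed.


Lemma pow_n_R (y : R) (k : nat) : pow_n (K := AbsRing.Ring R_AbsRing) y k = y ^ k.
Proof. induction k as [|k IHk]; simpl; [reflexivity | rewrite IHk; reflexivity]. Qed.

Ltac fix_pown := repeat match goal with |- context [pow_n ?y ?k] =>
  replace (pow_n y k) with (y ^ k) by (clear; induction k as [|k IHk]; simpl; [reflexivity| rewrite IHk; reflexivity]) end.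

Lemma geom_half_series (B : R) : is_series (fun k => B * (/2) ^ k) (2 * B).
Proof.
  replace (2 * B) with (scal B (/ (1 - /2))).
  apply (is_series_scal_l B (fun k => (/2)^k)). apply is_series_geom.
  rewrite Rabs_pos_eq; lra.
  unfold scal; simpl; unfold mult; simpl. field.
Qed.

Lemma pseries_bound (a : nat -> R) (B y : R) :
  (forall k, 0 <= a k <= B) -> 0 <= y <= /2 ->
  ex_pseries a y /\ 0 <= PSeries a y <= 2 * B.
Proof.
  intros Ha Hy.
  assert (Hb : forall k, 0 <= a k * y ^ k <= B * (/2) ^ k).
  { intros k. generalize (Ha k). intros. split. apply Rmult_le_pos. lra. apply pow_le; lra.
    apply Rmult_le_compat; try lra. apply pow_le; lra. apply pow_incr; lra. }
  assert (Hex : ex_series (fun k => a k * y ^ k)).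
  { apply (ex_series_le (fun k => a k * y ^ k) (fun k => B * (/2)^k)).
    intros k. unfold norm; simpl; unfold abs; simpl. rewrite Rabs_pos_eq; apply Hb.
    eexists; apply geom_half_series. }
  split.
  - unfold ex_pseries. apply (ex_series_ext (fun k => a k * y ^ k)). 2: exact Hex.
    intros k. unfold scal; simpl; unfold mult; simpl. rewrite Rmult_comm; f_equal; symmetry; apply pow_n_R.
  - unfold PSeries. split.
    + eapply Rle_trans. 2: apply (term_le_series (fun k => a k * y ^ k) _ O).
      simpl. apply Rmult_le_pos; [apply Ha | lra]. apply Hb. apply Series_correct; auto.
    + rewrite <- (is_series_unique _ _ (geom_half_series B)). apply Series_le.
      auto. eexists; apply geom_half_series.
Qed.

Lemma pseries_ge_0th (a : nat -> R) (y : R) :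
  (forall k, 0 <= a k) -> 0 <= y -> ex_pseries a y -> a O <= PSeries a y.
Proof.
  intros Ha Hy Hex. unfold PSeries.
  assert (Hs : is_series (fun k => a k * y ^ k) (Series (fun k => a k * y ^ k))).
  { apply Series_correct. apply (ex_series_ext (fun k => scal (pow_n y k) (a k))). 2: exact Hex. intros k.
    unfold scal; simpl; unfold mult; simpl. fix_pown. ring. }
  replace (a O) with (a O * y ^ O) by (simpl; ring).
  apply (term_le_series (fun k => a k * y ^ k)); auto.
  intros k. apply Rmult_le_pos; auto. apply pow_le; auto.
Qed.

Lemma pseries_mono (a : nat -> R) (y1 y2 : R) :
  (forall k, 0 <= a k) -> 0 <= y1 <= y2 -> ex_pseries a y2 -> PSeries a y1 <= PSeries a y2.
Proof.
  intros Ha Hy Hex. unfold PSeries. apply Series_le.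
  intros k. split. apply Rmult_le_pos; auto. apply pow_le; lra.
  apply Rmult_le_compat_l; auto. apply pow_incr; lra.
  apply (ex_series_ext (fun k => scal (pow_n y2 k) (a k))). 2: exact Hex. intros k.
  unfold scal; simpl; unfold mult; simpl. fix_pown. ring.
Qed.

Definition nu (n : nat) : R := INR n + / 2.
Definition Gm (n k : nat) : R := Gamma (INR k + nu n + 1).
Definition cc (n k : nat) : R := / (INR (fact k) * Gm n k).

Lemma nu_pos n : / 2 <= nu n.
Proof. unfold nu. generalize (pos_INR n). lra. Qed.

Lemma Gm_pos n k : 0 < Gm n k.
Proof.
  unfold Gm. apply (proj2 (Gamma_spec (INR k + nu n + 1) (k + n + 1)%nat ltac:(unfold nu; generalize (pos_INR k) (pos_INR n); lra)
     ltac:(rewrite !plus_INR; unfold nu; simpl; lra))).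
Qed.

Lemma Gm_rec n k : Gm n (S k) = (INR k + nu n + 1) * Gm n k.
Proof.
  unfold Gm. rewrite S_INR.
  replace (INR k + 1 + nu n + 1) with ((INR k + nu n + 1) + 1) by ring.
  apply (Gamma_rec _ (k + n + 2)%nat). unfold nu; generalize (pos_INR k) (pos_INR n); lra.
  rewrite !plus_INR; unfold nu; simpl; lra.
Qed.

Lemma Gm_mono n k : Gm n O <= Gm n k.
Proof.
  induction k. lra. rewrite Gm_rec. generalize (Gm_pos n k) (pos_INR k) (nu_pos n). nra.
Qed.

Lemma cc_pos n k : 0 < cc n k.
Proof. unfold cc. apply Rinv_0_lt_compat. apply Rmult_lt_0_compat. apply INR_fact_lt_0. apply Gm_pos. Qed.

Lemma cc_le n k : cc n k <= cc n O / INR (fact k).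
Proof.
  unfold cc. simpl (fact 0). simpl (INR 1). rewrite Rmult_1_l.
  generalize (Gm_pos n k) (Gm_pos n O) (Gm_mono n k) (INR_fact_lt_0 k). intros.
  rewrite Rinv_mult. unfold Rdiv. rewrite Rmult_comm. apply Rmult_le_compat_r.
  left; apply Rinv_0_lt_compat; auto. apply Rinv_le_contravar; auto.
Qed.

Lemma fact_ge1 k : 1 <= INR (fact k).
Proof. apply (le_INR 1). apply lt_O_fact. Qed.

Lemma cc_le0 n k : cc n k <= cc n O.
Proof.
  eapply Rle_trans. apply cc_le. generalize (cc_pos n O) (fact_ge1 k). intros.
  unfold Rdiv. rewrite <- (Rmult_1_r (cc n O)) at 2. apply Rmult_le_compat_l. lra.
  rewrite <- Rinv_1. apply Rinv_le_contravar; lra.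
Qed.

Lemma dcc_bound n k : 0 <= PS_derive (cc n) k <= cc n O.
Proof.
  unfold PS_derive. generalize (cc_pos n (S k)) (pos_INR (S k)) (cc_le n (S k)). intros.
  split. nra.
  eapply Rle_trans. apply Rmult_le_compat_l. apply pos_INR. apply H1.
  replace (fact (S k)) with (S k * fact k)%nat by reflexivity. rewrite mult_INR.
  generalize (fact_ge1 k) (cc_pos n O). intros.
  assert (0 < INR (S k)) by (apply lt_0_INR; lia).
  replace (INR (S k) * (cc n 0 / (INR (S k) * INR (fact k)))) with (cc n O / INR (fact k)) by (field; lra).
  unfold Rdiv. rewrite <- (Rmult_1_r (cc n O)) at 2. apply Rmult_le_compat_l. lra.
  rewrite <- Rinv_1. apply Rinv_le_contravar; lra.
Qed.

Lemma ddcc_bound n k : 0 <= PS_derive (PS_derive (cc n)) k <= cc n O.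
Proof.
  unfold PS_derive. generalize (cc_pos n (S (S k))) (pos_INR (S k)) (pos_INR (S (S k))) (cc_le n (S (S k))). intros.
  split. apply Rmult_le_pos; auto. nra.
  rewrite <- Rmult_assoc.
  eapply Rle_trans. apply Rmult_le_compat_l. nra. apply H2.
  replace (fact (S (S k))) with (S (S k) * (S k * fact k))%nat by reflexivity.
  rewrite !mult_INR.
  generalize (fact_ge1 k) (cc_pos n O). intros.
  assert (0 < INR (S k)) by (apply lt_0_INR; lia).
  assert (0 < INR (S (S k))) by (apply lt_0_INR; lia).
  replace (INR (S k) * INR (S (S k)) * (cc n 0 / (INR (S (S k)) * (INR (S k) * INR (fact k)))))
    with (cc n O / INR (fact k)) by (field; lra).
  unfold Rdiv. rewrite <- (Rmult_1_r (cc n O)) at 2. apply Rmult_le_compat_l. lra.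
  rewrite <- Rinv_1. apply Rinv_le_contravar; lra.
Qed.

Lemma CV_radius_cc n : CV_radius (cc n) = p_infty.
Proof.
  apply CV_radius_infinite_DAlembert.
  - intros k. generalize (cc_pos n k). lra.
  - apply (is_lim_seq_le_le (fun _ => 0) _ (fun k => / (INR k + 1))).
    + intros k. unfold cc. rewrite Gm_rec. replace (fact (S k)) with (S k * fact k)%nat by reflexivity. rewrite mult_INR.
      generalize (Gm_pos n k) (INR_fact_lt_0 k) (pos_INR k) (nu_pos n). intros.
      rewrite S_INR.
      replace (/ ((INR k + 1) * INR (fact k) * ((INR k + nu n + 1) * Gm n k)) / / (INR (fact k) * Gm n k))
        with (/ ((INR k + 1) * (INR k + nu n + 1))) by (field; repeat split; lra).
      rewrite Rabs_pos_eq. split. left. apply Rinv_0_lt_compat. nra.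
      apply Rinv_le_contravar. lra. nra.
      left. apply Rinv_0_lt_compat. nra.
    + apply is_lim_seq_const.
    + replace (Finite 0) with (Rbar_inv p_infty) by reflexivity.
      apply is_lim_seq_inv. 2: discriminate.
      apply (is_lim_seq_le_p_loc INR). exists O. intros k _. lra.
      apply is_lim_seq_INR.
Qed.


Definition gg n y := PSeries (cc n) y.
Definition gd n y := PSeries (PS_derive (cc n)) y.
Definition gdd n y := PSeries (PS_derive (PS_derive (cc n))) y.

Lemma Ih_repr n x : 0 < x -> Ih n x = Rpower (x/2) (nu n) * gg n (x*x/4).
Proof.
  intros Hx. unfold Ih, besselI, gg, PSeries. change (INR n + /2) with (nu n).
  rewrite <- Series_scal_l. apply Series_ext. intros k.
  rewrite Rpower_plus.
  replace (2 * INR k) with (INR (2 * k)) by (rewrite mult_INR; reflexivity).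
  rewrite Rpower_pow by lra. rewrite pow_mult.
  replace ((x/2)^2) with (x * x / 4) by field. unfold cc, Gm. unfold Rdiv. ring.
Qed.

Lemma rad_gt n (y : R) : Rbar_lt (Rabs y) (CV_radius (cc n)).
Proof. rewrite CV_radius_cc. simpl. auto. Qed.

Lemma rad_gt' n (y : R) : Rbar_lt (Rabs y) (CV_radius (PS_derive (cc n))).
Proof. rewrite CV_radius_derive, CV_radius_cc. simpl. auto. Qed.

Lemma gg_deriv n y : is_derive (gg n) y (gd n y).
Proof. apply is_derive_PSeries. apply rad_gt. Qed.

Lemma gd_deriv n y : is_derive (gd n) y (gdd n y).
Proof. apply is_derive_PSeries. apply rad_gt'. Qed.

Lemma Ih_deriv n x : 0 < x ->
  is_derive (Ih n) x (Rpower (x/2) (nu n) * (nu n / x * gg n (x*x/4) + x / 2 * gd n (x*x/4))).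
Proof.
  intros Hx.
  apply is_derive_ext_loc with (fun t => Rpower (t/2) (nu n) * gg n (t*t/4)).
  { exists (mkposreal x Hx). intros t Ht. simpl in Ht. unfold ball in Ht; simpl in Ht.
    unfold AbsRing_ball, abs, minus, plus, opp in Ht; simpl in Ht. apply Rabs_def2 in Ht.
    symmetry. apply Ih_repr. lra. }
  auto_derive.
  - split. apply ex_derive_Rpower; lra. split; auto. eexists; apply gg_deriv.
  - rewrite Derive_Rpower by lra. rewrite (is_derive_unique _ _ _ (gg_deriv n _)).
    replace (nu n - 1) with (nu n + - (1)) by ring. rewrite Rpower_plus, Rpower_Ropp, Rpower_1 by lra.
    unfold gd. unfold Rdiv. field. lra.
Qed.

Lemma cc_bounds n k : 0 <= cc n k <= cc n O.
Proof. split. left; apply cc_pos. apply cc_le0. Qed.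

Lemma gg_bounds n y : 0 <= y <= /2 ->
  cc n O <= gg n y /\ 0 <= gd n y <= 2 * cc n O /\ 0 <= gdd n y <= 2 * cc n O.
Proof.
  intros Hy.
  destruct (pseries_bound (cc n) (cc n O) y (cc_bounds n) Hy) as [Hex _].
  split. apply pseries_ge_0th; auto. intros k; left; apply cc_pos. lra.
  split. apply pseries_bound; auto. apply dcc_bound.
  apply pseries_bound; auto. apply ddcc_bound.
Qed.

Lemma gg_mono n y1 y2 : 0 <= y1 <= y2 -> y2 <= /2 -> gg n y1 <= gg n y2.
Proof.
  intros H1 H2. apply pseries_mono; auto. intros k; left; apply cc_pos.
  apply (pseries_bound (cc n) (cc n O) y2 (cc_bounds n)). lra.
Qed.

Definition phi n y := y * gd n y / gg n y.
Definition hh n x := nu n + 2 * phi n (x * x / 4).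

Lemma phi_bounds n y : 0 <= y <= /2 -> 0 <= phi n y <= 2 * y.
Proof.
  intros Hy. destruct (gg_bounds n y Hy) as [H1 [H2 H3]]. generalize (cc_pos n O). intros H0.
  unfold phi. split.
  - apply Rmult_le_pos. nra. left; apply Rinv_0_lt_compat; lra.
  - unfold Rdiv. apply Rmult_le_reg_r with (gg n y). lra.
    rewrite Rmult_assoc, Rinv_l by lra. nra.
Qed.

Lemma hh_bounds n x : 0 <= x * x / 4 <= /2 -> nu n <= hh n x <= nu n + 2.
Proof. intros H. generalize (phi_bounds n _ H). unfold hh. lra. Qed.

Lemma Ih_pos n x : 0 < x -> x * x / 4 <= /2 -> 0 < Ih n x.
Proof.
  intros Hx Hy. rewrite Ih_repr by auto. apply Rmult_lt_0_compat. unfold Rpower; apply exp_pos.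
  destruct (gg_bounds n (x*x/4) ltac:(nra)) as [H _]. generalize (cc_pos n O). lra.
Qed.

Lemma dIh_eq n x : 0 < x -> x * x / 4 <= /2 -> dIh n x = hh n x * Ih n x / x.
Proof.
  intros Hx Hy. unfold dIh. rewrite (is_derive_unique _ _ _ (Ih_deriv n x Hx)).
  rewrite Ih_repr by auto. unfold hh, phi.
  destruct (gg_bounds n (x*x/4) ltac:(nra)) as [H _]. generalize (cc_pos n O). intros.
  field. lra.
Qed.

Lemma phi_deriv n y : 0 <= y <= /2 ->
  is_derive (phi n) y ((gd n y + y * gdd n y) / gg n y - y * gd n y * gd n y / (gg n y * gg n y)).
Proof.
  intros Hy. destruct (gg_bounds n y Hy) as [H1 _]. generalize (cc_pos n O). intros.
  unfold phi. auto_derive.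
  - split. exists (gdd n y); apply gd_deriv. split. exists (gd n y); apply gg_deriv. split; auto. lra.
  - change (fun x => gd n x) with (gd n). change (fun x => gg n x) with (gg n).
    rewrite (is_derive_unique _ _ _ (gd_deriv n y)), (is_derive_unique _ _ _ (gg_deriv n y)).
    field. lra.
Qed.

Lemma phi_lip n y1 y2 : 0 <= y1 <= /2 -> 0 <= y2 <= /2 -> Rabs (phi n y1 - phi n y2) <= 5 * Rabs (y1 - y2).
Proof.
  intros H1 H2.
  destruct (MVT_abs (phi n) (fun y => (gd n y + y * gdd n y) / gg n y - y * gd n y * gd n y / (gg n y * gg n y)) y2 y1)
    as [c [Hc Hcr]].
  { intros c Hc. apply is_derive_Reals. apply phi_deriv.
    generalize (Rmin_l y2 y1) (Rmin_r y2 y1) (Rmax_l y2 y1) (Rmax_r y2 y1).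
    destruct (Rle_dec y1 y2); [rewrite Rmin_right in Hc by lra; rewrite Rmax_left in Hc by lra
      | rewrite Rmin_left in Hc by lra; rewrite Rmax_right in Hc by lra]; lra. }
  rewrite Hc.
  assert (Hc' : 0 <= c <= /2).
  { destruct (Rle_dec y1 y2); [rewrite Rmin_right in Hcr by lra; rewrite Rmax_left in Hcr by lra
      | rewrite Rmin_left in Hcr by lra; rewrite Rmax_right in Hcr by lra]; lra. }
  apply Rmult_le_compat_r. apply Rabs_pos.
  destruct (gg_bounds n c Hc') as [G1 [G2 G3]]. generalize (cc_pos n O). intros C0.
  set (c0 := cc n O) in *. set (g := gg n c) in *. set (d := gd n c) in *. set (e := gdd n c) in *.
  assert (A1 : 0 <= (d + c * e) / g <= 3).
  { split. apply Rmult_le_pos. nra. left; apply Rinv_0_lt_compat; lra.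
    unfold Rdiv. apply Rmult_le_reg_r with g. lra. rewrite Rmult_assoc, Rinv_l by lra. nra. }
  assert (A2 : 0 <= c * d * d / (g * g) <= 2).
  { split. apply Rmult_le_pos. apply Rmult_le_pos; nra. left; apply Rinv_0_lt_compat; nra.
    unfold Rdiv. apply Rmult_le_reg_r with (g * g). nra. rewrite Rmult_assoc, Rinv_l by nra.
    assert (d * d <= 4 * (c0 * c0)) by nra. assert (c0 * c0 <= g * g) by nra. nra. }
  apply Rabs_le. lra.
Qed.


Definition kf (v x t : R) : R := exp (- x * cosh t) * cosh (v * t).

Lemma exp_pow_INR (t : R) (m : nat) : (exp t) ^ m = exp (INR m * t).
Proof.
  induction m. simpl. rewrite Rmult_0_l, exp_0. auto.
  rewrite S_INR. simpl. rewrite IHm. rewrite <- exp_plus. f_equal. ring.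
Qed.

Lemma kf_cont v x t : continuous (kf v x) t.
Proof.
  apply (ex_derive_continuous (kf v x)). unfold kf, cosh. auto_derive. auto.
Qed.

Lemma kf_exRInt v x a b : ex_RInt (kf v x) a b.
Proof. apply (ex_RInt_continuous (V:=R_CompleteNormedModule)). intros; apply kf_cont. Qed.

Lemma cosh_pos t : 0 < cosh t.
Proof. unfold cosh. generalize (exp_pos t) (exp_pos (-t)). lra. Qed.

Lemma kf_pos v x t : 0 < kf v x t.
Proof. unfold kf. apply Rmult_lt_0_compat. apply exp_pos. apply cosh_pos. Qed.

Lemma cosh_le_exp z : 0 <= z -> cosh z <= exp z.
Proof.
  intros Hz. unfold cosh. assert (exp (- z) <= exp z) by (apply exp_le'; lra). lra.
Qed.

Lemma kf_bound v x t (m : nat) : 0 < x -> 0 <= v -> v + 1 <= INR m -> 0 <= t ->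
  kf v x t <= INR (fact m) / (x/2) ^ m * exp (- t).
Proof.
  intros Hx Hv Hm Ht. unfold kf.
  set (s := x / 2 * exp t).
  assert (Hs : 0 < s) by (unfold s; generalize (exp_pos t); nra).
  assert (H1 : exp (- x * cosh t) <= exp (- s)).
  { apply exp_le'. unfold s, cosh. generalize (exp_pos (-t)). nra. }
  assert (H2 : exp (- s) <= INR (fact m) / s ^ m).
  { generalize (exp_ge_pow s m (Rlt_le _ _ Hs)). intros H. rewrite exp_Ropp.
    generalize (exp_pos s) (pow_lt s m Hs) (INR_fact_lt_0 m). intros.
    apply Rmult_le_reg_r with (exp s * s ^ m). nra.
    replace (/ exp s * (exp s * s ^ m)) with (s ^ m) by (field; lra).
    replace (INR (fact m) / s ^ m * (exp s * s ^ m)) with (INR (fact m) * exp s) by (field; lra).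
    apply Rmult_le_reg_r with (/ INR (fact m)). apply Rinv_0_lt_compat; lra.
    replace (INR (fact m) * exp s * / INR (fact m)) with (exp s) by (field; lra). exact H. }
  assert (H3 : cosh (v * t) <= exp (v * t)) by (apply cosh_le_exp; nra).
  assert (Hsm : s ^ m = (x/2)^m * exp (INR m * t)).
  { unfold s. rewrite Rpow_mult_distr, exp_pow_INR. auto. }
  generalize (pow_lt (x/2) m ltac:(lra)) (INR_fact_lt_0 m) (exp_pos (INR m * t)) (cosh_pos (v*t)) (exp_pos (- x * cosh t)). intros P1 P2 P3 P4 P5.
  assert (H4 : exp (- x * cosh t) * cosh (v * t) <= INR (fact m) / s ^ m * exp (v * t)).
  { apply Rmult_le_compat; try lra. }
  eapply Rle_trans. apply H4. rewrite Hsm.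
  assert (H5 : exp (v * t) / exp (INR m * t) <= exp (- t)).
  { unfold Rdiv. rewrite <- exp_Ropp, <- exp_plus. apply exp_le'. nra. }
  replace (INR (fact m) / ((x / 2) ^ m * exp (INR m * t)) * exp (v * t)) with
    (INR (fact m) / (x/2)^m * (exp (v * t) / exp (INR m * t))) by (field; lra).
  apply Rmult_le_compat_l. apply Rlt_le, Rdiv_lt_0_compat; lra. exact H5.
Qed.

Lemma is_RInt_exp_neg (C a b : R) :
  is_RInt (fun t => C * exp (- t)) a b (C * (exp (- a) - exp (- b))).
Proof.
  replace (C * (exp (- a) - exp (- b))) with
    ((fun t => - C * exp (- t)) b - (fun t => - C * exp (- t)) a) by (simpl; ring).
  apply (is_RInt_derive (fun t => - C * exp (- t))).
  - intros x _. auto_derive. auto. ring.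
  - intros x _. apply (ex_derive_continuous (fun t => C * exp (- t))). auto_derive. auto.
Qed.

Lemma K_ex v x (m : nat) : 0 < x -> 0 <= v -> v + 1 <= INR m ->
  exists L, is_RInt_gen (kf v x) (at_point 0) (Rbar_locally p_infty) L /\
    forall b, 1 < b -> RInt (kf v x) 0 b <= L.
Proof.
  intros Hx Hv Hm.
  set (C := INR (fact m) / (x/2) ^ m).
  assert (HC : 0 < C) by (apply Rdiv_lt_0_compat; [apply INR_fact_lt_0 | apply pow_lt; lra]).
  destruct (monotone_gen (Fa := at_point 0) (Fb := Rbar_locally p_infty) (kf v x) (fun a b => RInt (kf v x) a b) (fun a => a = 0) (fun b => 1 < b) C)
    as [L [HL HLb]].
  - unfold at_point. reflexivity.
  - apply pinfty_gt.
  - intros a b Ha Hb. apply (RInt_correct (V:=R_CompleteNormedModule)). apply kf_exRInt.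
  - intros a b -> Hb. eapply Rle_trans. apply (RInt_le _ (fun t => C * exp (- t))). lra.
    apply kf_exRInt. eexists; apply is_RInt_exp_neg.
    intros t Ht. apply kf_bound; auto; lra.
    rewrite (is_RInt_unique _ _ _ _ (is_RInt_exp_neg C 0 b)).
    rewrite Ropp_0, exp_0. generalize (exp_pos (- b)). nra.
  - intros a0 b0 -> Hb0. exists (fun a => a = 0), (fun b => b0 < b).
    split. reflexivity. split. apply pinfty_gt.
    intros a b -> Hb.
    rewrite <- (RInt_Chasles (kf v x) 0 b0 b) by apply kf_exRInt.
    unfold plus; simpl.
    assert (0 <= RInt (kf v x) b0 b). { apply RInt_ge_0. lra. apply kf_exRInt. intros; left; apply kf_pos. }
    lra.
  - exists L. split; auto.
Qed.

Lemma K_spec v x (m : nat) : 0 < x -> 0 <= v -> v + 1 <= INR m ->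
  is_RInt_gen (kf v x) (at_point 0) (Rbar_locally p_infty) (besselK v x) /\ 0 < besselK v x.
Proof.
  intros Hx Hv Hm. destruct (K_ex v x m Hx Hv Hm) as [L [HL HLb]].
  assert (E : besselK v x = L).
  { unfold besselK. apply (is_RInt_gen_unique (kf v x)). exact HL. }
  rewrite E. split; auto.
  eapply Rlt_le_trans. 2: apply (HLb 2); lra.
  apply RInt_gt_0. lra. intros; apply kf_pos. intros; apply kf_cont.
Qed.

Lemma exp_convex (l A B : R) : 0 <= l <= 1 -> exp (l * A + (1 - l) * B) <= l * exp A + (1 - l) * exp B.
Proof.
  intros Hl. set (m := l * A + (1 - l) * B).
  assert (HA : exp m * (1 + (A - m)) <= exp A).
  { replace (exp A) with (exp m * exp (A - m)) by (rewrite <- exp_plus; f_equal; ring).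
    apply Rmult_le_compat_l. left; apply exp_pos. apply exp_ineq1_le. }
  assert (HB : exp m * (1 + (B - m)) <= exp B).
  { replace (exp B) with (exp m * exp (B - m)) by (rewrite <- exp_plus; f_equal; ring).
    apply Rmult_le_compat_l. left; apply exp_pos. apply exp_ineq1_le. }
  assert (E : l * (exp m * (1 + (A - m))) + (1 - l) * (exp m * (1 + (B - m))) = exp m) by (unfold m; ring).
  nra.
Qed.

Section KProps.
Variable v : R.
Variable m : nat.
Hypothesis Hv : 0 <= v.
Hypothesis Hm : v + 1 <= INR m.

Lemma K_pos x : 0 < x -> 0 < besselK v x.
Proof. intros Hx. apply (K_spec v x m Hx Hv Hm). Qed.

Lemma K_decr x y : 0 < x -> x < y -> besselK v y <= besselK v x.
Proof.
  intros Hx Hxy.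
  generalize (is_RInt_gen_minus _ _ _ _ (proj1 (K_spec v x m Hx Hv Hm)) (proj1 (K_spec v y m ltac:(lra) Hv Hm))).
  intros H. apply is_RInt_gen_nonneg in H.
  unfold minus, plus, opp in H; simpl in H. lra.
  intros t _. unfold minus, plus, opp; simpl. unfold kf.
  assert (exp (- y * cosh t) <= exp (- x * cosh t)). { apply exp_le'. generalize (cosh_pos t). nra. }
  generalize (cosh_pos (v * t)). nra.
Qed.

Lemma K_conv u1 u2 u3 : 0 < u1 -> u1 < u2 -> u2 < u3 ->
  (u3 - u1) * besselK v u2 <= (u3 - u2) * besselK v u1 + (u2 - u1) * besselK v u3.
Proof.
  intros H1 H2 H3.
  destruct (K_spec v u1 m ltac:(lra) Hv Hm) as [K1 _].
  destruct (K_spec v u2 m ltac:(lra) Hv Hm) as [K2 _].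
  destruct (K_spec v u3 m ltac:(lra) Hv Hm) as [K3 _].
  generalize (is_RInt_gen_minus _ _ _ _
     (is_RInt_gen_plus _ _ _ _ (is_RInt_gen_scal _ (u3 - u2) _ K1) (is_RInt_gen_scal _ (u2 - u1) _ K3))
     (is_RInt_gen_scal _ (u3 - u1) _ K2)).
  intros H. apply is_RInt_gen_nonneg in H.
  unfold minus, plus, opp, scal in H; simpl in H; unfold mult in H; simpl in H. lra.
  intros t _. unfold minus, plus, opp, scal; simpl; unfold mult; simpl. unfold kf.
  set (c := cosh t). assert (Hc : 0 < c) by apply cosh_pos.
  set (l := (u3 - u2) / (u3 - u1)).
  assert (Hl : 0 <= l <= 1).
  { unfold l. split. apply Rmult_le_pos; [lra | left; apply Rinv_0_lt_compat; lra].
    apply Rmult_le_reg_r with (u3 - u1). lra. unfold Rdiv. rewrite Rmult_assoc, Rinv_l by lra. lra. }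
  generalize (exp_convex l (- u1 * c) (- u3 * c) Hl). intros E.
  replace (l * (- u1 * c) + (1 - l) * (- u3 * c)) with (- u2 * c) in E by (unfold l; field; lra).
  assert (E2 : (u3 - u1) * exp (- u2 * c) <= (u3 - u2) * exp (- u1 * c) + (u2 - u1) * exp (- u3 * c)).
  { replace ((u3 - u2) * exp (- u1 * c) + (u2 - u1) * exp (- u3 * c)) with
      ((u3 - u1) * (l * exp (- u1 * c) + (1 - l) * exp (- u3 * c))) by (unfold l; field; lra).
    apply Rmult_le_compat_l; lra. }
  generalize (cosh_pos (v * t)). intros Hp. nra.
Qed.

End KProps.

Section DeriveConvex.
Variable k : R -> R.
Hypothesis Hdec : forall x y, 0 < x -> x < y -> k y <= k x.
Hypothesis Hconv : forall u1 u2 u3, 0 < u1 -> u1 < u2 -> u2 < u3 ->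
  (u3 - u1) * k u2 <= (u3 - u2) * k u1 + (u2 - u1) * k u3.

Definition qd (x h : R) := (k (x + h) - k x) / h.

Lemma qd_mono x h1 h2 : 0 < x -> 0 < h1 <= h2 -> qd x h1 <= qd x h2.
Proof.
  intros Hx [H1 [H2|H2]]; [| subst; lra].
  generalize (Hconv x (x + h1) (x + h2) Hx ltac:(lra) ltac:(lra)). intros C.
  unfold qd. unfold Rdiv. apply Rmult_le_reg_r with (h1 * h2). nra.
  replace ((k (x + h1) - k x) * / h1 * (h1 * h2)) with ((k (x + h1) - k x) * h2) by (field; lra).
  replace ((k (x + h2) - k x) * / h2 * (h1 * h2)) with ((k (x + h2) - k x) * h1) by (field; lra).
  replace (x + h2 - x) with h2 in C by ring. replace (x + h2 - (x + h1)) with (h2 - h1) in C by ring.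
  replace (x + h1 - x) with h1 in C by ring. nra.
Qed.

Lemma qd_lb x r h : 0 < r -> r < x -> 0 < h -> (k x - k r) / (x - r) <= qd x h.
Proof.
  intros Hr Hrx Hh.
  generalize (Hconv r x (x + h) Hr Hrx ltac:(lra)). intros C.
  unfold qd, Rdiv. apply Rmult_le_reg_r with ((x - r) * h). nra.
  replace ((k x - k r) * / (x - r) * ((x - r) * h)) with ((k x - k r) * h) by (field; lra).
  replace ((k (x + h) - k x) * / h * ((x - r) * h)) with ((k (x + h) - k x) * (x - r)) by (field; lra).
  nra.
Qed.

Definition qs (x : R) (n : nat) := qd x (/ (INR n + 1)).

Lemma inv_n_pos n : 0 < / (INR n + 1).
Proof. apply Rinv_0_lt_compat. generalize (pos_INR n). lra. Qed.

Lemma qs_decr x n : 0 < x -> qs x (S n) <= qs x n.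
Proof.
  intros Hx. unfold qs. apply qd_mono; auto. split. apply inv_n_pos.
  apply Rinv_le_contravar. generalize (pos_INR n); lra. rewrite S_INR. lra.
Qed.

Lemma Derive_char x : 0 < x -> is_lim_seq (qs x) (Derive k x).
Proof.
  intros Hx.
  assert (Hex : ex_finite_lim_seq (qs x)).
  { apply (ex_finite_lim_seq_decr _ ((k x - k (x/2)) / (x - x/2))).
    intros n. apply qs_decr; auto.
    intros n. unfold qs. apply qd_lb; try lra. apply inv_n_pos. }
  assert (E : Lim (fun h => (k (x + h) - k x) / h) 0 = Lim_seq (qs x)).
  { unfold Lim. apply Lim_seq_ext. intros n. unfold qs, qd. simpl. rewrite Rplus_0_l. reflexivity. }
  unfold Derive. rewrite E.
  apply ex_finite_lim_seq_correct in Hex. destruct Hex as [Hex Hfin].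
  apply Lim_seq_correct'. apply ex_finite_lim_seq_correct. split; auto.
Qed.

Lemma Derive_le_qs x n : 0 < x -> Derive k x <= qs x n.
Proof.
  intros Hx. apply (is_lim_seq_decr_compare (qs x)). apply Derive_char; auto.
  intros; apply qs_decr; auto.
Qed.

Lemma Derive_ge x c : 0 < x -> (forall n, c <= qs x n) -> c <= Derive k x.
Proof.
  intros Hx H. generalize (is_lim_seq_le (fun _ => c) (qs x) c (Derive k x) H (is_lim_seq_const c) (Derive_char x Hx)).
  simpl. auto.
Qed.

Lemma Derive_nonpos x : 0 < x -> Derive k x <= 0.
Proof.
  intros Hx. eapply Rle_trans. apply (Derive_le_qs x O Hx).
  unfold qs, qd. simpl. rewrite Rplus_0_l, Rinv_1. generalize (Hdec x (x+1) Hx ltac:(lra)). intros.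
  unfold Rdiv. rewrite Rinv_1. lra.
Qed.

Lemma Derive_mono r s : 0 < r -> r < s -> Derive k r <= Derive k s.
Proof.
  intros Hr Hrs.
  destruct (archimed_cor1 (s - r) ltac:(lra)) as [N [HN1 HN2]].
  assert (HN : / (INR N + 1) <= s - r).
  { assert (0 < INR N) by (apply lt_0_INR; lia).
    left. eapply Rle_lt_trans. 2: exact HN1. apply Rinv_le_contravar; lra. }
  apply Rle_trans with ((k s - k r) / (s - r)).
  - eapply Rle_trans. apply (Derive_le_qs r N Hr). unfold qs.
    replace ((k s - k r) / (s - r)) with (qd r (s - r)) by (unfold qd; f_equal; f_equal; f_equal; ring).
    apply qd_mono; auto. split; auto. apply inv_n_pos.
  - apply Derive_ge. lra. intros n. unfold qs. apply qd_lb; auto. apply inv_n_pos.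
Qed.

End DeriveConvex.


Lemma nu_m n : 0 <= nu n /\ nu n + 1 <= INR (n + 2).
Proof. unfold nu. rewrite plus_INR. simpl. generalize (pos_INR n). lra. Qed.

Lemma Kh_pos n x : 0 < x -> 0 < Kh n x.
Proof. intros. unfold Kh. apply (K_pos (nu n) (n+2)); try apply nu_m; auto. Qed.

Lemma Kh_decr n x y : 0 < x -> x < y -> Kh n y <= Kh n x.
Proof. intros. unfold Kh. apply (K_decr (nu n) (n+2)); try apply nu_m; auto. Qed.

Lemma Kh_conv n u1 u2 u3 : 0 < u1 -> u1 < u2 -> u2 < u3 ->
  (u3 - u1) * Kh n u2 <= (u3 - u2) * Kh n u1 + (u2 - u1) * Kh n u3.
Proof. intros. unfold Kh. apply (K_conv (nu n) (n+2)); try apply nu_m; auto. Qed.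

Lemma dKh_nonpos n x : 0 < x -> dKh n x <= 0.
Proof. intros. unfold dKh. apply (Derive_nonpos (Kh n) (Kh_decr n) (Kh_conv n)); auto. Qed.

Lemma dKh_mono n r s : 0 < r -> r < s -> dKh n r <= dKh n s.
Proof. intros. unfold dKh. apply (Derive_mono (Kh n) (Kh_conv n)); auto. Qed.

Lemma rho_bounds (s Ia dIa Ir dIr Kr dKr K1 dK1 : R) :
  0 < s -> 0 < Ia -> 0 < dIa -> 0 < K1 -> K1 <= Kr -> dKr <= dK1 -> dK1 <= 0 ->
  let N := s * dIa * Ir - Ia * dIr in
  let rh := N / (s * dIa * Kr - Ia * dKr) in
  Rabs (rh * K1) <= Rabs N / (s * dIa) /\ Rabs (rh * dK1) <= Rabs N / Ia /\
  Rabs (rh * dK1) <= Rabs N / (s * dIa) * (- dK1 / K1).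
Proof.
  intros Hs HIa HdIa HK1 HKr HdKr HdK1 N rh.
  set (D := s * dIa * Kr - Ia * dKr).
  assert (HD1 : s * dIa * Kr <= D) by (unfold D; nra).
  assert (HD2 : Ia * (- dK1) <= D) by (unfold D; assert (0 <= s * dIa * Kr) by (apply Rmult_le_pos; nra); nra).
  assert (HsdIa : 0 < s * dIa) by nra.
  assert (HD : 0 < D) by nra.
  generalize (Rabs_pos N). intros HN.
  unfold rh. fold D. rewrite !Rabs_mult, Rabs_div by (intro; lra). rewrite (Rabs_pos_eq D) by lra.
  rewrite (Rabs_pos_eq K1) by lra. rewrite (Rabs_left1 dK1) by lra.
  repeat split.
  - unfold Rdiv. rewrite Rmult_assoc. apply Rmult_le_compat_l; auto.
    apply Rmult_le_reg_r with (D * (s * dIa)). nra.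
    replace (/ D * K1 * (D * (s * dIa))) with (K1 * (s * dIa)) by (field; lra).
    replace (/ (s * dIa) * (D * (s * dIa))) with D by (field; lra). nra.
  - unfold Rdiv. rewrite Rmult_assoc. apply Rmult_le_compat_l; auto.
    apply Rmult_le_reg_r with (D * Ia). nra.
    replace (/ D * - dK1 * (D * Ia)) with (- dK1 * Ia) by (field; lra).
    replace (/ Ia * (D * Ia)) with D by (field; lra). nra.
  - unfold Rdiv. rewrite !Rmult_assoc. apply Rmult_le_compat_l; auto.
    apply Rmult_le_reg_r with (D * (s * dIa) * K1). repeat apply Rmult_lt_0_compat; lra.
    replace (/ D * - dK1 * (D * (s * dIa) * K1)) with (- dK1 * (s * dIa) * K1) by (field; lra).
    replace (/ (s * dIa) * (- dK1 * / K1) * (D * (s * dIa) * K1)) with (- dK1 * D) by (field; lra).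
    assert (0 <= - dK1) by lra. assert (s * dIa * K1 <= D) by nra. rewrite Rmult_assoc. apply Rmult_le_compat_l; lra.
Qed.

Lemma lam_diff_bound (u v I1 dI1 : R) : 0 < I1 -> 0 < dI1 -> Rabs v <= dI1 / 2 ->
  Rabs ((u - I1) / (v - dI1) - I1 / dI1) <= 2 * (Rabs u * dI1 + I1 * Rabs v) / (dI1 * dI1).
Proof.
  intros H1 H2 Hv.
  assert (Hvd : v - dI1 < 0) by (generalize (Rle_abs v); lra).
  replace ((u - I1) / (v - dI1) - I1 / dI1) with ((u * dI1 - I1 * v) / ((v - dI1) * dI1)) by (field; lra).
  rewrite Rabs_div by nra. rewrite Rabs_mult, (Rabs_left (v - dI1)) by lra. rewrite (Rabs_pos_eq dI1) by lra.
  assert (Hn : Rabs (u * dI1 - I1 * v) <= Rabs u * dI1 + I1 * Rabs v).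
  { unfold Rminus. eapply Rle_trans. apply Rabs_triang. rewrite Rabs_Ropp, !Rabs_mult.
    rewrite (Rabs_pos_eq dI1), (Rabs_pos_eq I1) by lra. lra. }
  assert (Hd : dI1 / 2 <= - (v - dI1)) by (generalize (Rle_abs v); lra).
  unfold Rdiv. apply Rmult_le_reg_r with (- (v - dI1) * dI1 * (dI1 * dI1)). 
  repeat apply Rmult_lt_0_compat; lra.
  replace (Rabs (u * dI1 - I1 * v) * / (- (v - dI1) * dI1) * (- (v - dI1) * dI1 * (dI1 * dI1)))
    with (Rabs (u * dI1 - I1 * v) * (dI1 * dI1)) by (field; lra).
  replace (2 * (Rabs u * dI1 + I1 * Rabs v) * / (dI1 * dI1) * (- (v - dI1) * dI1 * (dI1 * dI1)))
    with (2 * (Rabs u * dI1 + I1 * Rabs v) * (- (v - dI1) * dI1)) by (field; lra).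
  generalize (Rabs_pos u) (Rabs_pos v) (Rabs_pos (u * dI1 - I1 * v)). intros.
  assert (0 <= Rabs u * dI1 + I1 * Rabs v) by nra.
  assert (Rabs (u * dI1 - I1 * v) * (dI1 * dI1) <= (Rabs u * dI1 + I1 * Rabs v) * (dI1 * dI1)).
  { apply Rmult_le_compat_r; nra. }
  assert ((Rabs u * dI1 + I1 * Rabs v) * (dI1 * dI1) <= 2 * (Rabs u * dI1 + I1 * Rabs v) * (- (v - dI1) * dI1)).
  { replace (2 * (Rabs u * dI1 + I1 * Rabs v) * (- (v - dI1) * dI1)) with
      ((Rabs u * dI1 + I1 * Rabs v) * (2 * (- (v - dI1)) * dI1)) by ring.
    apply Rmult_le_compat_l; auto. nra. }
  lra.
Qed.


Lemma final_combine (d u v I1 h1 nv P E T r : R) :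
  0 < I1 -> 0 < nv -> nv <= h1 -> 0 < T -> 0 < r -> 0 <= P ->
  Rabs u <= P * I1 * Rabs E / (T * nv) -> Rabs v <= P * I1 * Rabs E / r ->
  Rabs d <= 2 * (Rabs u * (h1 * I1) + I1 * Rabs v) / ((h1 * I1) * (h1 * I1)) ->
  2 * nv * Rabs d <= 4 * P * Rabs E * (/ T + / r) / nv.
Proof.
  intros HI Hn Hh HT Hr HP Hu Hv Hd.
  set (X := Rabs u / I1). set (Y := Rabs v / I1).
  assert (HX : X <= P * Rabs E / (T * nv)).
  { unfold X. unfold Rdiv. apply Rmult_le_reg_r with I1. auto.
    rewrite Rmult_assoc, Rinv_l, Rmult_1_r by lra. unfold Rdiv in Hu. 
    replace (P * Rabs E * / (T * nv) * I1) with (P * I1 * Rabs E * / (T * nv)) by ring. auto. }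
  assert (HY : Y <= P * Rabs E / r).
  { unfold Y. unfold Rdiv. apply Rmult_le_reg_r with I1. auto.
    rewrite Rmult_assoc, Rinv_l, Rmult_1_r by lra. unfold Rdiv in Hv.
    replace (P * Rabs E * / r * I1) with (P * I1 * Rabs E * / r) by ring. auto. }
  assert (HX0 : 0 <= X) by (unfold X; apply Rmult_le_pos; [apply Rabs_pos | left; apply Rinv_0_lt_compat; auto]).
  assert (HY0 : 0 <= Y) by (unfold Y; apply Rmult_le_pos; [apply Rabs_pos | left; apply Rinv_0_lt_compat; auto]).
  assert (Hd' : Rabs d <= 2 * X / h1 + 2 * Y / (h1 * h1)).
  { eapply Rle_trans. apply Hd. right. unfold X, Y. field. lra. }
  assert (A1 : 2 * X / h1 <= 2 * X / nv).
  { unfold Rdiv. apply Rmult_le_compat_l. lra. apply Rinv_le_contravar; lra. }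
  assert (A2 : 2 * Y / (h1 * h1) <= 2 * Y / (nv * nv)).
  { unfold Rdiv. apply Rmult_le_compat_l. lra. apply Rinv_le_contravar; nra. }
  assert (A3 : 2 * nv * Rabs d <= 4 * X + 4 * Y / nv).
  { replace (4 * X + 4 * Y / nv) with (2 * nv * (2 * X / nv + 2 * Y / (nv * nv))) by (field; lra).
    apply Rmult_le_compat_l. lra. lra. }
  eapply Rle_trans. apply A3.
  replace (4 * P * Rabs E * (/ T + / r) / nv) with (4 * (P * Rabs E / (T * nv)) + 4 * (P * Rabs E / r) / nv)
    by (field; lra).
  assert (4 * Y / nv <= 4 * (P * Rabs E / r) / nv).
  { unfold Rdiv. apply Rmult_le_compat_r. left; apply Rinv_0_lt_compat; auto. lra. }
  lra.
Qed.

Lemma final_combineB (d u v I1 h1 nv P E T ha Q : R) :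
  0 < I1 -> 0 < nv -> nv <= h1 -> nv <= ha -> 0 < T -> 0 <= P -> 0 <= Q ->
  Rabs u <= P * I1 * Rabs E / (T * ha) -> Rabs v <= P * I1 * Rabs E / (T * ha) * Q ->
  Rabs d <= 2 * (Rabs u * (h1 * I1) + I1 * Rabs v) / ((h1 * I1) * (h1 * I1)) ->
  2 * nv * Rabs d <= 4 * P * Rabs E * (/ nv + Q / (nv * nv)) / T.
Proof.
  intros HI Hn Hh Ha HT HP HQ Hu Hv Hd.
  set (A := P * Rabs E / (T * ha)).
  assert (HA0 : 0 <= A) by (unfold A; apply Rmult_le_pos; [apply Rmult_le_pos; auto; apply Rabs_pos | left; apply Rinv_0_lt_compat; nra]).
  set (X := Rabs u / I1). set (Y := Rabs v / I1).
  assert (HX : X <= A).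
  { unfold X, A. unfold Rdiv. apply Rmult_le_reg_r with I1. auto.
    rewrite Rmult_assoc, Rinv_l, Rmult_1_r by lra. unfold Rdiv in Hu.
    replace (P * Rabs E * / (T * ha) * I1) with (P * I1 * Rabs E * / (T * ha)) by ring. auto. }
  assert (HY : Y <= A * Q).
  { unfold Y, A. unfold Rdiv. apply Rmult_le_reg_r with I1. auto.
    rewrite Rmult_assoc, Rinv_l, Rmult_1_r by lra. unfold Rdiv in Hv.
    replace (P * Rabs E * / (T * ha) * Q * I1) with (P * I1 * Rabs E * / (T * ha) * Q) by ring. auto. }
  assert (HX0 : 0 <= X) by (unfold X; apply Rmult_le_pos; [apply Rabs_pos | left; apply Rinv_0_lt_compat; auto]).
  assert (HY0 : 0 <= Y) by (unfold Y; apply Rmult_le_pos; [apply Rabs_pos | left; apply Rinv_0_lt_compat; auto]).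
  assert (Hd' : Rabs d <= 2 * X / h1 + 2 * Y / (h1 * h1)).
  { eapply Rle_trans. apply Hd. right. unfold X, Y. field. lra. }
  assert (A1 : 2 * X / h1 <= 2 * X / nv).
  { unfold Rdiv. apply Rmult_le_compat_l. lra. apply Rinv_le_contravar; lra. }
  assert (A2 : 2 * Y / (h1 * h1) <= 2 * Y / (nv * nv)).
  { unfold Rdiv. apply Rmult_le_compat_l. lra. apply Rinv_le_contravar; nra. }
  assert (A3 : 2 * nv * Rabs d <= 4 * X + 4 * Y / nv).
  { replace (4 * X + 4 * Y / nv) with (2 * nv * (2 * X / nv + 2 * Y / (nv * nv))) by (field; lra).
    apply Rmult_le_compat_l. lra. lra. }
  assert (HAT : A <= P * Rabs E / (T * nv)).
  { unfold A, Rdiv. apply Rmult_le_compat_l. apply Rmult_le_pos; auto; apply Rabs_pos.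
    apply Rinv_le_contravar; nra. }
  eapply Rle_trans. apply A3.
  replace (4 * P * Rabs E * (/ nv + Q / (nv * nv)) / T) with
    (4 * (P * Rabs E / (T * nv)) + 4 * ((P * Rabs E / (T * nv)) * Q) / nv) by (field; lra).
  assert (4 * Y / nv <= 4 * (P * Rabs E / (T * nv) * Q) / nv).
  { unfold Rdiv. apply Rmult_le_compat_r. left; apply Rinv_0_lt_compat; auto.
    apply Rmult_le_compat_l. lra. eapply Rle_trans. apply HY. apply Rmult_le_compat_r; auto. }
  lra.
Qed.

Lemma Ih_ratio n r : 0 < r < 1 -> Ih n r <= Rpower r (nu n) * Ih n 1.
Proof.
  intros Hr. rewrite !Ih_repr by lra.
  replace (r / 2) with (r * / 2) by reflexivity. rewrite <- Rpower_mult_distr by lra.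
  replace (1 / 2) with (/ 2) by field. rewrite Rmult_assoc.
  apply Rmult_le_compat_l. unfold Rpower; left; apply exp_pos.
  apply Rmult_le_compat_l. unfold Rpower; left; apply exp_pos.
  apply gg_mono; nra.
Qed.

Lemma per_n_setup n s r : 0 < s -> 0 < r < 1 -> r * r <= 2 * s ->
  let t := sqrt s in let a := r / t in
  let E := t * t * t * hh n a - hh n r in
  let P := Rpower r (nu n) in
  let u := rho s r n * Kh n 1 in let v := rho s r n * dKh n 1 in
  let I1 := Ih n 1 in
  0 < I1 /\ dIh n 1 = hh n 1 * I1 /\ nu n <= hh n 1 <= nu n + 2 /\ nu n <= hh n a <= nu n + 2 /\
  nu n <= hh n r <= nu n + 2 /\ 0 < t /\ 0 < a /\
  Rabs u <= P * I1 * Rabs E / (t * t * t * hh n a) /\ Rabs v <= P * I1 * Rabs E / r /\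
  Rabs v <= P * I1 * Rabs E / (t * t * t * hh n a) * (- dKh n 1 / Kh n 1) /\
  0 <= - dKh n 1 / Kh n 1 /\
  lam_cs s r n = (u - I1) / (v - dIh n 1) /\ lam_hom n = I1 / dIh n 1.
Proof.
  intros Hs Hr Hrs t a E P u v I1.
  assert (Ht : 0 < t) by (apply sqrt_lt_R0; auto).
  assert (Htt : t * t = s) by (apply sqrt_sqrt; lra).
  assert (Ha : 0 < a) by (unfold a; apply Rdiv_lt_0_compat; lra).
  assert (Ha2 : a * a / 4 <= / 2).
  { unfold a. replace (r / t * (r / t) / 4) with (r * r / (4 * (t * t))) by (field; lra).
    rewrite Htt. apply Rmult_le_reg_r with (4 * s). lra. unfold Rdiv. rewrite Rmult_assoc, Rinv_l by lra. lra. }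
  assert (Hr2 : r * r / 4 <= / 2) by nra.
  assert (H12 : 1 * 1 / 4 <= / 2) by lra.
  assert (HIa := Ih_pos n a Ha Ha2). assert (HIr := Ih_pos n r ltac:(lra) Hr2).
  assert (HI1 := Ih_pos n 1 ltac:(lra) H12).
  assert (EdIa := dIh_eq n a Ha Ha2). assert (EdIr := dIh_eq n r ltac:(lra) Hr2).
  assert (EdI1 := dIh_eq n 1 ltac:(lra) H12).
  assert (Hha := hh_bounds n a ltac:(nra)). assert (Hhr := hh_bounds n r ltac:(nra)).
  assert (Hh1 := hh_bounds n 1 ltac:(lra)).
  generalize (nu_pos n). intros Hnu.
  assert (HK1 := Kh_pos n 1 ltac:(lra)).
  assert (HKr := Kh_decr n r 1 ltac:(lra) ltac:(lra)).
  assert (HdK := dKh_mono n r 1 ltac:(lra) ltac:(lra)).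
  assert (HdK1 := dKh_nonpos n 1 ltac:(lra)).
  assert (HdIa : 0 < dIh n a).
  { rewrite EdIa. apply Rdiv_lt_0_compat; auto. apply Rmult_lt_0_compat; auto. lra. }
  assert (HIrP := Ih_ratio n r Hr). fold P I1 in HIrP.
  destruct (rho_bounds s (Ih n a) (dIh n a) (Ih n r) (dIh n r) (Kh n r) (dKh n r) (Kh n 1) (dKh n 1)
    Hs HIa HdIa HK1 HKr HdK HdK1) as [B1 [B2 B3]].
  assert (ErN : s * dIh n a * Ih n r - Ih n a * dIh n r = Ih n a * Ih n r * E / r).
  { rewrite EdIa, EdIr. unfold E, a. rewrite <- Htt. field. lra. }
  assert (ErS : s * dIh n a = t * t * t * hh n a * Ih n a / r).
  { rewrite EdIa. unfold a. rewrite <- Htt. field. lra. }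
  assert (Hrho : rho s r n = (s * dIh n a * Ih n r - Ih n a * dIh n r) /
                          (s * dIh n a * Kh n r - Ih n a * dKh n r)) by reflexivity.
  fold t a in Hrho.
  assert (HE0 := Rabs_pos E).
  assert (HTa : 0 < t * t * t * hh n a) by (repeat apply Rmult_lt_0_compat; lra).
  assert (AN : Rabs (s * dIh n a * Ih n r - Ih n a * dIh n r) = Ih n a * Ih n r * Rabs E / r).
  { rewrite ErN. unfold Rdiv. rewrite !Rabs_mult, (Rabs_pos_eq (Ih n a)), (Rabs_pos_eq (Ih n r)) by lra.
    rewrite Rabs_inv, (Rabs_pos_eq r) by lra. ring. }
  assert (Q1 : Rabs (s * dIh n a * Ih n r - Ih n a * dIh n r) / (s * dIh n a) <= P * I1 * Rabs E / (t * t * t * hh n a)).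
  { rewrite AN, ErS.
    replace (Ih n a * Ih n r * Rabs E / r / (t * t * t * hh n a * Ih n a / r)) with
      (Ih n r * Rabs E / (t * t * t * hh n a)) by (field; repeat split; lra).
    unfold Rdiv. apply Rmult_le_compat_r. left; apply Rinv_0_lt_compat; auto.
    replace (P * I1 * Rabs E) with ((P * I1) * Rabs E) by ring. apply Rmult_le_compat_r; auto. }
  assert (Q2 : Rabs (s * dIh n a * Ih n r - Ih n a * dIh n r) / Ih n a <= P * I1 * Rabs E / r).
  { rewrite AN. replace (Ih n a * Ih n r * Rabs E / r / Ih n a) with (Ih n r * Rabs E / r) by (field; lra).
    unfold Rdiv. apply Rmult_le_compat_r. left; apply Rinv_0_lt_compat; lra.
    apply Rmult_le_compat_r; auto. }
  assert (HQ : 0 <= - dKh n 1 / Kh n 1) by (apply Rmult_le_pos; [lra | left; apply Rinv_0_lt_compat; lra]).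
  unfold u, v. unfold I1 in *.
  split. lra. split. rewrite EdI1. field.
  split. lra. split. lra. split. lra. split. lra. split. lra.
  split. rewrite Hrho. eapply Rle_trans. apply B1. exact Q1.
  split. rewrite Hrho. eapply Rle_trans. apply B2. exact Q2.
  split. rewrite Hrho. eapply Rle_trans. apply B3. apply Rmult_le_compat_r; auto.
  split. auto.
  split; reflexivity.
Qed.

Lemma per_n_A n s r : 0 < s -> 0 < r < 1 -> r * r <= 2 * s ->
  let t := sqrt s in let a := r / t in
  let E := t * t * t * hh n a - hh n r in
  let P := Rpower r (nu n) in
  P * Rabs E / r <= nu n / 2 ->
  2 * nu n * Rabs (lam_cs s r n - lam_hom n) <= 4 * P * Rabs E * (/ (t * t * t) + / r) / nu n.
Proof.
  intros Hs Hr Hrs t a E P Hc.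
  destruct (per_n_setup n s r Hs Hr Hrs) as [HI1 [EdI1 [Hh1 [Hha [Hhr [Ht [Ha [Bu [Bv [Bv' [HQ [El Eh]]]]]]]]]]]].
  fold t a E P in Bu, Bv, Bv', El, Eh. rewrite El, Eh. fold t in Ht, Ha, Hha. fold a in Ha, Hha.
  generalize (nu_pos n). intros Hnu.
  assert (HP : 0 <= P) by (unfold P, Rpower; left; apply exp_pos).
  rewrite EdI1.
  apply (final_combine _ (rho s r n * Kh n 1) (rho s r n * dKh n 1) (Ih n 1) (hh n 1)); auto; try lra.
  - repeat apply Rmult_lt_0_compat; lra.
  - eapply Rle_trans. apply Bu. unfold Rdiv. apply Rmult_le_compat_l.
    apply Rmult_le_pos. nra. apply Rabs_pos.
    apply Rinv_le_contravar. repeat apply Rmult_lt_0_compat; lra.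
    apply Rmult_le_compat_l. repeat apply Rmult_le_pos; lra. lra.
  - apply lam_diff_bound. auto. apply Rmult_lt_0_compat; lra.
    eapply Rle_trans. apply Bv.
    replace (P * Ih n 1 * Rabs E / r) with (P * Rabs E / r * Ih n 1) by (field; lra).
    apply Rle_trans with (nu n / 2 * Ih n 1). apply Rmult_le_compat_r; lra. nra.
Qed.

Lemma per_n_B n s r : 0 < s -> 0 < r < 1 -> r * r <= 2 * s ->
  let t := sqrt s in let a := r / t in
  let E := t * t * t * hh n a - hh n r in
  let P := Rpower r (nu n) in
  let Q := - dKh n 1 / Kh n 1 in
  P * Rabs E * Q / (t * t * t * nu n) <= nu n / 2 ->
  2 * nu n * Rabs (lam_cs s r n - lam_hom n) <= 4 * P * Rabs E * (/ nu n + Q / (nu n * nu n)) / (t * t * t).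
Proof.
  intros Hs Hr Hrs t a E P Q Hc.
  destruct (per_n_setup n s r Hs Hr Hrs) as [HI1 [EdI1 [Hh1 [Hha [Hhr [Ht [Ha [Bu [Bv [Bv' [HQ [El Eh]]]]]]]]]]]].
  fold t a E P Q in Bu, Bv, Bv', El, Eh, HQ. rewrite El, Eh. fold t in Ht, Ha, Hha. fold a in Ha, Hha. clearbody Q.
  generalize (nu_pos n). intros Hnu.
  assert (HP : 0 <= P) by (unfold P, Rpower; left; apply exp_pos).
  assert (HT : 0 < t * t * t) by (repeat apply Rmult_lt_0_compat; lra).
  rewrite EdI1.
  apply (final_combineB _ (rho s r n * Kh n 1) (rho s r n * dKh n 1) (Ih n 1) (hh n 1) (nu n) P E (t*t*t) (hh n a) Q); auto; try lra.
  apply lam_diff_bound. auto. apply Rmult_lt_0_compat; lra.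
  eapply Rle_trans. apply Bv'.
  assert (P * Ih n 1 * Rabs E / (t * t * t * hh n a) * Q <= P * Rabs E * Q / (t * t * t * nu n) * Ih n 1).
  { replace (P * Ih n 1 * Rabs E / (t * t * t * hh n a) * Q) with (P * Rabs E * Q * Ih n 1 / (t * t * t * hh n a)) by (field; lra).
    replace (P * Rabs E * Q / (t * t * t * nu n) * Ih n 1) with (P * Rabs E * Q * Ih n 1 / (t * t * t * nu n)) by (field; lra).
    unfold Rdiv. apply Rmult_le_compat_l. repeat apply Rmult_le_pos; try lra. apply Rabs_pos.
    apply Rinv_le_contravar. nra. apply Rmult_le_compat_l; lra. }
  apply Rle_trans with (nu n / 2 * Ih n 1). eapply Rle_trans. apply H. apply Rmult_le_compat_r; lra. nra.
Qed.


Lemma Cmod_diff_mult (a b : R) (z : C) :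
  Cmod (Cminus (Cmult (RtoC a) z) (Cmult (RtoC b) z)) = Rabs (a - b) * Cmod z.
Proof.
  replace (Cminus (Cmult (RtoC a) z) (Cmult (RtoC b) z)) with (Cmult (RtoC (a - b)) z).
  rewrite Cmod_mult, Cmod_R. reflexivity.
  destruct z as [x y]. unfold Cminus, Cmult, Cplus, Copp, RtoC; simpl. f_equal; ring.
Qed.

Lemma sum_sq_nonneg (f : nat -> R) (N : nat) : 0 <= sum_f_R0 (fun j => f j ^ 2) N.
Proof. apply cond_pos_sum. intros. apply pow2_ge_0. Qed.

Lemma hs_term_nonneg s c n : 0 <= hs_term s c n.
Proof.
  unfold hs_term. apply Rmult_le_pos. unfold Rpower; left; apply exp_pos.
  apply sum_sq_nonneg.
Qed.

Lemma sum_n_le' (u v : nat -> R) (N : nat) : (forall k, u k <= v k) -> sum_n u N <= sum_n v N.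
Proof.
  intros H. induction N. rewrite !sum_O. auto. rewrite !sum_Sn. unfold plus; simpl.
  specialize (H (S N)). lra.
Qed.

Lemma opnorm_le (lam1 lam2 : nat -> R) (eps : R) : 0 <= eps ->
  (forall n, (lam1 n - lam2 n) ^ 2 * (1 + INR n * (INR n + 1)) <= eps ^ 2) ->
  Rbar_le (opnorm_m12_12 (fun c n j => Cminus (multiplier lam1 c n j) (multiplier lam2 c n j))) (Finite eps).
Proof.
  intros Heps Hl. unfold opnorm_m12_12.
  destruct (Glb_Rbar_correct (fun M => 0 <= M /\ forall c, in_Hs (- / 2) c ->
      Rbar_le (hs_normsq (/ 2) ((fun c n j => Cminus (multiplier lam1 c n j) (multiplier lam2 c n j)) c))
        (Finite (M ^ 2 * Series (hs_term (- / 2) c))))) as [Hlb _].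
  apply Hlb. split; auto.
  intros c Hc.
  set (T := fun n j => Cminus (multiplier lam1 c n j) (multiplier lam2 c n j)).
  assert (Hterm : forall n, hs_term (/2) T n <= eps ^ 2 * hs_term (- / 2) c n).
  { intros n. unfold hs_term, T, multiplier.
    set (W := 1 + INR n * (INR n + 1)).
    assert (HW : 0 < W) by (unfold W; generalize (pos_INR n); nra).
    assert (E1 : sum_f_R0 (fun j => Cmod (Cminus (Cmult (RtoC (lam1 n)) (c n j)) (Cmult (RtoC (lam2 n)) (c n j))) ^ 2) (2 * n)
              = (lam1 n - lam2 n) ^ 2 * sum_f_R0 (fun j => Cmod (c n j) ^ 2) (2 * n)).
    { rewrite scal_sum. apply sum_eq. intros i _. rewrite Cmod_diff_mult.
      rewrite Rpow_mult_distr. rewrite pow2_abs. ring. }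
    rewrite E1.
    assert (E2 : Rpower W (/2) = Rpower W (- / 2) * W).
    { replace (/2) with (- / 2 + 1) at 1 by field. rewrite Rpower_plus, Rpower_1; auto. }
    rewrite E2.
    generalize (sum_sq_nonneg (fun j => Cmod (c n j)) (2 * n)). intros HS.
    set (S := sum_f_R0 (fun j => Cmod (c n j) ^ 2) (2 * n)) in *.
    assert (HR : 0 < Rpower W (- / 2)) by (unfold Rpower; apply exp_pos).
    specialize (Hl n). fold W in Hl.
    replace (Rpower W (- / 2) * W * ((lam1 n - lam2 n) ^ 2 * S)) with
      ((Rpower W (- / 2) * S) * ((lam1 n - lam2 n) ^ 2 * W)) by ring.
    replace (eps ^ 2 * (Rpower W (- / 2) * S)) with ((Rpower W (- / 2) * S) * eps ^ 2) by ring.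
    apply Rmult_le_compat_l. nra. exact Hl. }
  unfold hs_normsq. 
  assert (Hser : is_series (hs_term (- / 2) c) (Series (hs_term (- / 2) c))) by (apply Series_correct; exact Hc).
  assert (Hpart : forall N, sum_n (hs_term (/2) T) N <= eps ^ 2 * Series (hs_term (- / 2) c)).
  { intros N. apply Rle_trans with (eps ^ 2 * sum_n (hs_term (- / 2) c) N).
    - replace (eps ^ 2 * sum_n (hs_term (- / 2) c) N) with (sum_n (fun k => eps ^ 2 * hs_term (- / 2) c k) N).
      apply sum_n_le'. intros k. apply Hterm.
      clear. induction N. rewrite !sum_O. reflexivity. rewrite !sum_Sn, IHN. unfold plus; simpl. ring.
    - apply Rmult_le_compat_l. apply pow2_ge_0. apply sum_n_le_lim; auto. intros; apply hs_term_nonneg. }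
  assert (Hinc : forall N, sum_n (hs_term (/2) T) N <= sum_n (hs_term (/2) T) (S N)).
  { intros N. rewrite sum_Sn. unfold plus; simpl. generalize (hs_term_nonneg (/2) T (S N)). lra. }
  generalize (Lim_seq_correct _ (ex_lim_seq_incr _ Hinc)). intros HL.
  apply (is_lim_seq_le _ (fun _ => eps ^ 2 * Series (hs_term (- / 2) c)) _ _ Hpart HL (is_lim_seq_const _)).
Qed.


Lemma weight_ok n d eps : 2 * nu n * Rabs d <= eps -> d ^ 2 * (1 + INR n * (INR n + 1)) <= eps ^ 2.
Proof.
  intros H. generalize (pos_INR n) (Rabs_pos d). intros Hn Hd. unfold nu in H.
  assert (W : 1 + INR n * (INR n + 1) <= (2 * (INR n + / 2)) ^ 2) by nra.
  assert (d ^ 2 = Rabs d ^ 2) by (rewrite <- pow2_abs; auto).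
  rewrite H0.
  apply Rle_trans with (Rabs d ^ 2 * (2 * (INR n + / 2)) ^ 2).
  apply Rmult_le_compat_l. apply pow2_ge_0. auto.
  replace (Rabs d ^ 2 * (2 * (INR n + / 2)) ^ 2) with ((2 * (INR n + / 2) * Rabs d) ^ 2) by ring.
  apply pow_incr. split. apply Rmult_le_pos; lra. auto.
Qed.

Lemma Rpower_exp_dec r p q : 0 < r < 1 -> q <= p -> Rpower r p <= Rpower r q.
Proof.
  intros Hr Hpq. unfold Rpower. apply exp_le'.
  assert (ln r < 0) by (rewrite <- ln_1; apply ln_increasing; lra). nra.
Qed.

Lemma P_le_sqrt n r : 0 < r < 1 -> Rpower r (nu n) <= sqrt r.
Proof. intros. rewrite <- Rpower_sqrt by lra. apply Rpower_exp_dec; auto. apply nu_pos. Qed.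

Lemma P_div_r n r : 0 < r < 1 -> (1 <= n)%nat -> Rpower r (nu n) / r <= sqrt r.
Proof.
  intros Hr Hn. replace (nu n) with ((nu n - 1) + 1) by ring. rewrite Rpower_plus, Rpower_1 by lra.
  replace (Rpower r (nu n - 1) * r / r) with (Rpower r (nu n - 1)) by (field; lra).
  rewrite <- Rpower_sqrt by lra. apply Rpower_exp_dec; auto.
  unfold nu. apply le_INR in Hn. simpl in Hn. lra.
Qed.

Lemma sqrt_small r eta : 0 < r -> 0 < eta -> r <= eta * eta -> sqrt r <= eta.
Proof.
  intros. rewrite <- (sqrt_square eta) by lra. apply sqrt_le_1; lra.
Qed.

Lemma part1 r eps : 0 < r < 1 -> 0 < eps -> exists delta, 0 < delta /\
  forall s, 0 < s -> s <> 1 -> Rabs (s - 1) < delta ->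
    Rbar_le (opnorm_m12_12 (NtD_diff s r)) (Finite eps).
Proof.
  intros Hr Heps.
  assert (Hsr : 0 < sqrt r) by (apply sqrt_lt_R0; lra).
  set (R0 := sqrt r / r).
  assert (HR0 : 0 < R0) by (unfold R0; apply Rdiv_lt_0_compat; lra).
  set (m := Rmin eps 1).
  assert (Hm : 0 < m /\ m <= eps /\ m <= 1) by (unfold m; split; [apply Rmin_glb_lt; lra | split; [apply Rmin_l | apply Rmin_r]]).
  exists (Rmin (/2) (m / (400 * R0 + 1))). split.
  { apply Rmin_glb_lt. lra. apply Rdiv_lt_0_compat; lra. }
  intros s Hs Hs1 Hd.
  set (e := Rabs (s - 1)).
  assert (He1 : e < /2) by (generalize (Rmin_l (/2) (m / (400 * R0 + 1))); unfold e; lra).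
  assert (He2 : e < m / (400 * R0 + 1)) by (generalize (Rmin_r (/2) (m / (400 * R0 + 1))); unfold e; lra).
  assert (He0 : 0 <= e) by apply Rabs_pos.
  assert (Hs2 : /2 < s < 3/2) by (unfold e in He1; apply Rabs_def2 in He1; lra).
  assert (He3 : 400 * R0 * e <= m).
  { apply Rmult_lt_compat_r with (r := 400 * R0 + 1) in He2. 2: lra.
    unfold Rdiv in He2. rewrite Rmult_assoc, Rinv_l in He2 by lra. nra. }
  unfold NtD_diff, NtD_cs, NtD_hom. apply opnorm_le. lra.
  intros n. apply weight_ok.
  assert (Hrs : r * r <= 2 * s) by nra.
  generalize (per_n_A n s r Hs Hr Hrs). 
  set (t := sqrt s). set (a := r / t). set (E := t * t * t * hh n a - hh n r). set (P := Rpower r (nu n)).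
  intros HA.
  assert (Ht : 0 < t) by (apply sqrt_lt_R0; lra).
  assert (Htt : t * t = s) by (apply sqrt_sqrt; lra).
  assert (Ht1 : 7/10 < t < 5/4) by (split; nra).
  assert (HT : 1/3 < t * t * t) by nra.
  assert (HTm1 : Rabs (t * t * t - 1) <= 3 * e).
  { assert (Hd1 : t - 1 = (s - 1) / (t + 1)) by (rewrite <- Htt; field; lra).
    assert (Rabs (t - 1) <= e).
    { rewrite Hd1. unfold Rdiv. rewrite Rabs_mult, Rabs_inv, (Rabs_pos_eq (t + 1)) by lra.
      fold e. apply Rmult_le_reg_r with (t + 1). lra. rewrite Rmult_assoc, Rinv_l by lra. nra. }
    replace (t * t * t - 1) with ((s - 1) * t + (t - 1)) by (rewrite <- Htt; ring).
    eapply Rle_trans. apply Rabs_triang. rewrite Rabs_mult, (Rabs_pos_eq t) by lra. fold e. nra. }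
  assert (Ha : 0 < a) by (unfold a; apply Rdiv_lt_0_compat; lra).
  assert (Ha2 : a * a / 4 = r * r / (4 * s)) by (unfold a; rewrite <- Htt; field; lra).
  assert (Hya : 0 <= a * a / 4 <= /2).
  { rewrite Ha2. split. apply Rmult_le_pos. nra. left; apply Rinv_0_lt_compat; lra.
    apply Rmult_le_reg_r with (4 * s). lra. unfold Rdiv. rewrite Rmult_assoc, Rinv_l by lra. nra. }
  assert (Hyr : 0 <= r * r / 4 <= /2) by nra.
  assert (Hdy : Rabs (a * a / 4 - r * r / 4) <= e / 2).
  { rewrite Ha2. replace (r * r / (4 * s) - r * r / 4) with (r * r / 4 * ((1 - s) / s)) by (field; lra).
    rewrite Rabs_mult, (Rabs_pos_eq (r * r / 4)) by nra.
    unfold Rdiv at 2. rewrite Rabs_mult, Rabs_inv, (Rabs_pos_eq s) by lra.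
    replace (1 - s) with (- (s - 1)) by ring. rewrite Rabs_Ropp. fold e.
    apply Rle_trans with (r * r / 4 * (e * 2)).
    apply Rmult_le_compat_l. nra. apply Rmult_le_compat_l. auto.
    rewrite <- (Rinv_inv 2). apply Rinv_le_contravar; lra. assert (r * r <= 1) by nra. replace (r * r / 4 * (e * 2)) with (r * r * e / 2) by field. unfold Rdiv. nra. }
  assert (Hha := hh_bounds n a ltac:(lra)). assert (Hhr := hh_bounds n r ltac:(lra)).
  assert (Hdh : Rabs (hh n a - hh n r) <= 5 * e).
  { unfold hh. replace (nu n + 2 * phi n (a * a / 4) - (nu n + 2 * phi n (r * r / 4)))
      with (2 * (phi n (a * a / 4) - phi n (r * r / 4))) by ring.
    rewrite Rabs_mult, Rabs_pos_eq by lra.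
    generalize (phi_lip n (a * a / 4) (r * r / 4) Hya Hyr). lra. }
  generalize (nu_pos n). intros Hnu.
  assert (HE : Rabs E <= 25 * e * nu n).
  { unfold E. replace (t * t * t * hh n a - hh n r) with ((t * t * t - 1) * hh n a + (hh n a - hh n r)) by ring.
    eapply Rle_trans. apply Rabs_triang. rewrite Rabs_mult, (Rabs_pos_eq (hh n a)) by lra.
    assert (Rabs (t * t * t - 1) * hh n a <= 3 * e * (nu n + 2)).
    { apply Rmult_le_compat; try lra. apply Rabs_pos. }
    nra. }
  assert (HP : 0 <= P) by (unfold P, Rpower; left; apply exp_pos).
  assert (HPr : P / r <= R0).
  { unfold R0, Rdiv. apply Rmult_le_compat_r. left; apply Rinv_0_lt_compat; lra. apply P_le_sqrt; auto. }
  assert (HE0 := Rabs_pos E).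
  assert (Hcond : P * Rabs E / r <= nu n / 2).
  { replace (P * Rabs E / r) with (P / r * Rabs E) by (field; lra).
    apply Rle_trans with (R0 * (25 * e * nu n)). apply Rmult_le_compat; auto.
    apply Rmult_le_pos; [lra | left; apply Rinv_0_lt_compat; lra].
    assert (R0 * 25 * e <= /2) by nra. nra. }
  cbv zeta in HA. fold a in HA. fold E in HA. specialize (HA Hcond).
  eapply Rle_trans. exact HA.
  assert (HiT : / (t * t * t) <= 3).
  { rewrite <- (Rinv_inv 3). apply Rinv_le_contravar; lra. }
  assert (Hir : 1 <= / r) by (rewrite <- Rinv_1; apply Rinv_le_contravar; lra).
  apply Rle_trans with (16 * (P / r) * (Rabs E / nu n)).
  { replace (4 * P * Rabs E * (/ (t * t * t) + / r) / nu n) with (4 * P * (Rabs E / nu n) * (/ (t * t * t) + / r)) by (field; lra).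
    replace (16 * (P / r) * (Rabs E / nu n)) with (4 * P * (Rabs E / nu n) * (4 * / r)) by (field; lra).
    apply Rmult_le_compat_l. apply Rmult_le_pos. lra. apply Rmult_le_pos; auto. left; apply Rinv_0_lt_compat; lra.
    lra. }
  assert (Rabs E / nu n <= 25 * e).
  { apply Rmult_le_reg_r with (nu n). lra. unfold Rdiv. rewrite Rmult_assoc, Rinv_l by lra. lra. }
  apply Rle_trans with (16 * R0 * (25 * e)).
  apply Rmult_le_compat. apply Rmult_le_pos. lra. apply Rmult_le_pos; auto. left; apply Rinv_0_lt_compat; lra.
  apply Rmult_le_pos. auto. left; apply Rinv_0_lt_compat; lra. lra. auto.
  lra.
Qed.

Lemma part2 s eps : 0 < s -> 0 < eps -> exists delta, 0 < delta /\
  forall r, 0 < r < 1 -> r < delta ->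
    Rbar_le (opnorm_m12_12 (NtD_diff s r)) (Finite eps).
Proof.
  intros Hs Heps.
  set (t := sqrt s). set (T := t * t * t).
  assert (Ht : 0 < t) by (apply sqrt_lt_R0; lra).
  assert (HT : 0 < T) by (unfold T; repeat apply Rmult_lt_0_compat; lra).
  set (Q0 := - dKh 0 1 / Kh 0 1).
  assert (HQ0 : 0 <= Q0).
  { unfold Q0. generalize (dKh_nonpos 0 1 ltac:(lra)) (Kh_pos 0 1 ltac:(lra)). intros.
    apply Rmult_le_pos. lra. left; apply Rinv_0_lt_compat; lra. }
  assert (HiT : 0 < / T) by (apply Rinv_0_lt_compat; lra).
  set (K := 12 * (T + 1) * (/ T + 1) + 10 * (T + 1) * (2 + 4 * Q0) / T + 6 * (T + 1) + 20 * (T + 1) * Q0 / T + 1).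
  assert (HK1 : 0 <= 12 * (T + 1) * (/ T + 1)) by nra.
  assert (HK2 : 0 <= 10 * (T + 1) * (2 + 4 * Q0) / T).
  { unfold Rdiv. apply Rmult_le_pos. nra. lra. }
  assert (HK3 : 0 <= 20 * (T + 1) * Q0 / T).
  { unfold Rdiv. apply Rmult_le_pos. nra. lra. }
  assert (HK : 0 < K) by (unfold K; lra).
  set (m := Rmin eps (/4)).
  assert (Hm : 0 < m /\ m <= eps /\ m <= /4) by (unfold m; split; [apply Rmin_glb_lt; lra | split; [apply Rmin_l | apply Rmin_r]]).
  set (eta := m / K).
  assert (Heta : 0 < eta) by (unfold eta; apply Rdiv_lt_0_compat; lra).
  assert (HetaK : eta * K = m) by (unfold eta; field; lra).
  exists (Rmin s (Rmin 1 (eta * eta))). split.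
  { apply Rmin_glb_lt. lra. apply Rmin_glb_lt. lra. nra. }
  intros r Hr Hrd.
  assert (Hrs0 : r < s) by (generalize (Rmin_l s (Rmin 1 (eta * eta))); lra).
  assert (Hre : r <= eta * eta) by (generalize (Rmin_r s (Rmin 1 (eta * eta))) (Rmin_r 1 (eta * eta)); lra).
  assert (Hsq : sqrt r <= eta) by (apply sqrt_small; lra).
  assert (Hrs : r * r <= 2 * s) by nra.
  unfold NtD_diff, NtD_cs, NtD_hom. apply opnorm_le. lra.
  intros n. apply weight_ok.
  set (a := r / t). set (E := t * t * t * hh n a - hh n r). set (P := Rpower r (nu n)).
  assert (Htt : t * t = s) by (apply sqrt_sqrt; lra).
  assert (Ha : 0 < a) by (unfold a; apply Rdiv_lt_0_compat; lra).
  assert (Hya : 0 <= a * a / 4 <= /2).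
  { replace (a * a / 4) with (r * r / (4 * s)) by (unfold a; rewrite <- Htt; field; lra).
    split. apply Rmult_le_pos. nra. left; apply Rinv_0_lt_compat; lra.
    apply Rmult_le_reg_r with (4 * s). lra. unfold Rdiv. rewrite Rmult_assoc, Rinv_l by lra. nra. }
  assert (Hha := hh_bounds n a ltac:(lra)). assert (Hhr := hh_bounds n r ltac:(nra)).
  generalize (nu_pos n). intros Hnu.
  assert (HE : Rabs E <= (T + 1) * (nu n + 2)).
  { unfold E. fold T. eapply Rle_trans. apply Rabs_triang. rewrite Rabs_Ropp.
    rewrite Rabs_mult, (Rabs_pos_eq T), (Rabs_pos_eq (hh n a)), (Rabs_pos_eq (hh n r)) by lra. nra. }
  assert (HE0 := Rabs_pos E).
  assert (HP : 0 <= P) by (unfold P, Rpower; left; apply exp_pos).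
  destruct n as [|n'].
  -
    assert (Hnu0 : nu 0 = / 2) by (unfold nu; simpl; ring).
    generalize (per_n_B 0 s r Hs Hr Hrs). cbv zeta. fold t. fold a E P Q0. fold T.
    intros HB. rewrite Hnu0 in *.
    assert (HP0 : P <= eta) by (eapply Rle_trans; [apply P_le_sqrt; auto | auto]).
    assert (HE' : Rabs E <= (T + 1) * (5/2)) by lra.
    assert (Hprod : P * Rabs E <= eta * ((T + 1) * (5/2))) by (apply Rmult_le_compat; auto).
    eapply Rle_trans. apply HB.
    + replace (P * Rabs E * Q0 / (T * / 2)) with (2 * (P * Rabs E) * Q0 / T) by (field; lra).
      apply Rle_trans with (2 * (eta * ((T + 1) * (5/2))) * Q0 / T).
      { unfold Rdiv. apply Rmult_le_compat_r. lra. apply Rmult_le_compat_r. lra. lra. }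
      replace (2 * (eta * ((T + 1) * (5 / 2))) * Q0 / T) with (eta * (5 * (T + 1) * Q0 / T)) by (field; lra).
      assert (eta * (5 * (T + 1) * Q0 / T) <= eta * K / 4).
      { replace (eta * K / 4) with (eta * (K / 4)) by field. apply Rmult_le_compat_l. lra.
        replace (5 * (T + 1) * Q0 / T) with (20 * (T + 1) * Q0 / T / 4) by (field; lra). unfold K. lra. }
      rewrite HetaK in H. lra.
    + replace (4 * P * Rabs E * (/ / 2 + Q0 / (/ 2 * / 2)) / T) with (4 * (P * Rabs E) * (2 + 4 * Q0) / T) by (field; lra).
      apply Rle_trans with (4 * (eta * ((T + 1) * (5/2))) * (2 + 4 * Q0) / T).
      { unfold Rdiv. apply Rmult_le_compat_r. lra. apply Rmult_le_compat_r. lra. lra. }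
      replace (4 * (eta * ((T + 1) * (5 / 2))) * (2 + 4 * Q0) / T) with (eta * (10 * (T + 1) * (2 + 4 * Q0) / T)) by (field; lra).
      apply Rle_trans with (eta * K). apply Rmult_le_compat_l. lra. unfold K. lra. lra.
  -
    assert (Hnu1 : 3/2 <= nu (S n')) by (unfold nu; rewrite S_INR; generalize (pos_INR n'); lra).
    generalize (per_n_A (S n') s r Hs Hr Hrs). cbv zeta. fold t. fold a E P. fold T.
    intros HA.
    assert (HPr : P / r <= eta) by (eapply Rle_trans; [apply P_div_r; auto; lia | auto]).
    assert (HPr0 : 0 <= P / r) by (apply Rmult_le_pos; [auto | left; apply Rinv_0_lt_compat; lra]).
    assert (HEn : Rabs E / nu (S n') <= 3 * (T + 1)).
    { apply Rmult_le_reg_r with (nu (S n')). lra. unfold Rdiv. rewrite Rmult_assoc, Rinv_l by lra. nra. }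
    assert (HEn0 : 0 <= Rabs E / nu (S n')) by (apply Rmult_le_pos; [auto | left; apply Rinv_0_lt_compat; lra]).
    assert (Hprod : P / r * (Rabs E / nu (S n')) <= eta * (3 * (T + 1))) by (apply Rmult_le_compat; auto).
    eapply Rle_trans. apply HA.
    + replace (P * Rabs E / r) with (P / r * (Rabs E / nu (S n')) * nu (S n')) by (field; lra).
      assert (eta * (3 * (T + 1)) <= / 2).
      { apply Rle_trans with (eta * K). apply Rmult_le_compat_l. lra. unfold K. nra. lra. }
      nra.
    + replace (4 * P * Rabs E * (/ T + / r) / nu (S n')) with (4 * (P / r * (Rabs E / nu (S n'))) * (r / T + 1)) by (field; lra).
      assert (Hr1 : r / T + 1 <= / T + 1).
      { unfold Rdiv. assert (r * / T <= 1 * / T) by (apply Rmult_le_compat_r; lra). lra. }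
      apply Rle_trans with (4 * (eta * (3 * (T + 1))) * (/ T + 1)).
      { apply Rmult_le_compat. apply Rmult_le_pos. lra. apply Rmult_le_pos; auto.
        assert (0 <= r / T) by (unfold Rdiv; apply Rmult_le_pos; lra). lra. lra. lra. }
      replace (4 * (eta * (3 * (T + 1))) * (/ T + 1)) with (eta * (12 * (T + 1) * (/ T + 1))) by ring.
      apply Rle_trans with (eta * K). apply Rmult_le_compat_l. lra. unfold K. lra. lra.
Qed.


Theorem theorem3p1 :
  (forall r1 : R, 0 < r1 < 1 ->
     forall eps : R, 0 < eps ->
       exists delta : R, 0 < delta /\
         forall s1 : R, 0 < s1 -> s1 <> 1 -> Rabs (s1 - 1) < delta ->
           Rbar_le (opnorm_m12_12 (NtD_diff s1 r1)) (Finite eps))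
  /\
  (forall s1 : R, 0 < s1 ->
     forall eps : R, 0 < eps ->
       exists delta : R, 0 < delta /\
         forall r1 : R, 0 < r1 < 1 -> r1 < delta ->
           Rbar_le (opnorm_m12_12 (NtD_diff s1 r1)) (Finite eps)).
Proof.
  split.
  - intros r1 Hr eps Heps. apply part1; auto.
  - intros s1 Hs eps Heps. apply part2; auto.
Qed.
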